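(* Let Assumptions (G) and (S) hold and let the local clocks be synchronized from $t_0$ on. Let $Q\in\mathbb{R}^{n\times n}$ be symmetric positive definite, and let $P\in\mathbb{R}^{n\times n}$ be a symmetric positive definite solution of the algebraic Riccati equation $$PA+A^TP-PBB^TP+Q=0.$$ Set $K=-B^TP$, and choose constants $c_1\ge \frac{1}{2\lambda_2}$ and $c_2\ge f_0(N-1)$. Let $s_i$, $i=1,\dots,N$, be a solution on $[t_0,\infty)$ of the static algorithm (SA) with $s_i(t_0)=0$ for all $i$, and set $x_i=s_i+r_i$. Then $$\lim_{t\to\infty}\Big\|x_i(t)-\frac1N\sum_{k=1}^N r_k(t)\Big\|=0\qquad\text{for all } i=1,\dots,N.$$
   Context: Graph: $\mathcal{G}$ is a simple graph on the vertex set $\{1,\dots,N\}$. Assumption (G): $\mathcal{G}$ is undirected and connected. $\mathcal{N}_i$ denotes the neighbor set of node $i$ and $|\mathcal{N}_i|$ its cardinality. $L$ is the graph Laplacian (degree matrix minus adjacency matrix), and $\lambda_2$ is its smallest nonzero eigenvalue. Reference signals: $A\in\mathbb{R}^{n\times n}$ and $B\in\mathbb{R}^{n\times p}$ are constant matrices. Assumption (S): the pair $(A,B)$ is stabilizable. For $i=1,\dots,N$, the signal $r_i:[t_0,\infty)\to\mathbb{R}^n$ satisfies $\dot r_i(t)=Ar_i(t)+Bf_i(t)$, where $f_i:[t_0,\infty)\to\mathbb{R}^p$ is continuous with $\|f_i(t)\|\le f_0$ for all $t$, and $f_0>0$ is a constant. Local clocks: each agent $i$ has a local time $t_i(t)$.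 ''The local clocks are synchronized from $t_0$ on'' means that there is a constant $\eta$ such that $t_i(t)=t+\eta$ for all $i$ and all $t\ge t_0$. Boundary-layer function: for fixed constants $\varepsilon>0$ and $\varphi>0$, and for $\omega\in\mathbb{R}^p$, set $h_i(\omega,t_i)=\dfrac{\omega}{\|\omega\|+\varepsilon e^{-\varphi t_i}}$. Static algorithm (SA): for $i=1,\dots,N$ and $t\ge t_0$, $$\dot s_i=As_i+Bu_i,\qquad u_i=c_1\sum_{j\in\mathcal{N}_i}K(x_i-x_j)+c_2\sum_{j\in\mathcal{N}_i}h_i\big(K(x_i-x_j),t_i\big),\qquad x_i=s_i+r_i.$$ *)

(* Defs.v *)
From Stdlib Require Import Reals Relations.
Open Scope R_scope.

(* Vectors in R^n are functions nat -> R (only components 0..n-1 matter);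
   matrices are functions nat -> nat -> R (row, column). *)
Definition vec := nat -> R.
Definition mat := nat -> nat -> R.

Fixpoint fsum (n : nat) (f : nat -> R) : R :=
  match n with O => 0 | S k => fsum k f + f k end.

Definition vadd (u v : vec) : vec := fun k => u k + v k.
Definition vsub (u v : vec) : vec := fun k => u k - v k.
Definition vscale (c : R) (v : vec) : vec := fun k => c * v k.
Definition vsum (m : nat) (g : nat -> vec) : vec := fun k => fsum m (fun j => g j k).

Definition mv (m : nat) (M : mat) (v : vec) : vec := fun i => fsum m (fun j => M i j * v j).
Definition mmul (m : nat) (M N : mat) : mat := fun i j => fsum m (fun l => M i l * N l j).
Definition mtr (M : mat) : mat := fun i j => M j i.
Definition madd (M N : mat) : mat := fun i j => M i j + N i j.

Definition vnorm (n : nat) (v : vec) : R := sqrt (fsum n (fun k => v k ^ 2)).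

Definition symmetric (n : nat) (M : mat) : Prop :=
  forall i j, (i < n)%nat -> (j < n)%nat -> M i j = M j i.
Definition posdef (n : nat) (M : mat) : Prop :=
  forall v : vec, (exists k, (k < n)%nat /\ v k <> 0) ->
    0 < fsum n (fun i => v i * mv n M v i).
Definition sym_posdef (n : nat) (M : mat) : Prop := symmetric n M /\ posdef n M.

Definition deriv_on (t0 : R) (g g' : R -> R) : Prop :=
  forall t, t0 <= t -> forall eps, 0 < eps -> exists delta, 0 < delta /\
    forall h, h <> 0 -> Rabs h < delta -> t0 <= t + h ->
      Rabs ((g (t + h) - g t) / h - g' t) < eps.
Definition vderiv_on (t0 : R) (n : nat) (x x' : R -> vec) : Prop :=
  forall k, (k < n)%nat -> deriv_on t0 (fun t => x t k) (fun t => x' t k).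
Definition cont_on (t0 : R) (g : R -> R) : Prop :=
  forall t, t0 <= t -> forall eps, 0 < eps -> exists delta, 0 < delta /\
    forall s, t0 <= s -> Rabs (s - t) < delta -> Rabs (g s - g t) < eps.
Definition vcont_on (t0 : R) (n : nat) (x : R -> vec) : Prop :=
  forall k, (k < n)%nat -> cont_on t0 (fun t => x t k).

Definition tends_to_0 (g : R -> R) : Prop :=
  forall eps, 0 < eps -> exists T, forall t, T <= t -> Rabs (g t) < eps.

Definition stabilizable (n p : nat) (A B : mat) : Prop :=
  exists F : mat, forall z : R -> vec,
    vderiv_on 0 n z (fun t => mv n (madd A (mmul p B F)) (z t)) ->
    tends_to_0 (fun t => vnorm n (z t)).

Definition simple_undirected (N : nat) (adj : nat -> nat -> bool) : Prop :=
  (forall i j, (i < N)%nat -> (j < N)%nat -> adj i j = adj j i) /\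
  (forall i, (i < N)%nat -> adj i i = false).
Definition edge (N : nat) (adj : nat -> nat -> bool) : relation nat :=
  fun i j => (i < N)%nat /\ (j < N)%nat /\ adj i j = true.
Definition connected (N : nat) (adj : nat -> nat -> bool) : Prop :=
  forall i j, (i < N)%nat -> (j < N)%nat -> clos_refl_trans nat (edge N adj) i j.

Definition degree (N : nat) (adj : nat -> nat -> bool) (i : nat) : R :=
  fsum N (fun j => if adj i j then 1 else 0).
Definition laplacian (N : nat) (adj : nat -> nat -> bool) : mat :=
  fun i j => (if Nat.eqb i j then degree N adj i else 0) - (if adj i j then 1 else 0).

Definition is_eigenvalue (N : nat) (M : mat) (mu : R) : Prop :=
  exists v : vec, (exists k, (k < N)%nat /\ v k <> 0) /\
    forall i, (i < N)%nat -> mv N M v i = mu * v i.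
Definition smallest_nonzero_eigenvalue (N : nat) (M : mat) (lam : R) : Prop :=
  is_eigenvalue N M lam /\ lam <> 0 /\
  forall mu, is_eigenvalue N M mu -> mu <> 0 -> lam <= mu.

Definition nbsum (N : nat) (adj : nat -> nat -> bool) (i : nat) (g : nat -> vec) : vec :=
  vsum N (fun j => if adj i j then g j else (fun _ => 0)).

Definition hbl (p : nat) (epsl phi : R) (w : vec) (ti : R) : vec :=
  vscale (/ (vnorm p w + epsl * exp (- phi * ti))) w.

(* Main.v *)
Require Import Defs.
From Stdlib Require Import Reals Lra Lia ZArith Relations ClassicalEpsilon FunctionalExtensionality Classical Bool.
From Coquelicot Require Derive.
Open Scope R_scope.

Lemma fsum_ext n f g : (forall i, (i < n)%nat -> f i = g i) -> fsum n f = fsum n g.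
Proof. induction n; simpl; intros H; auto. rewrite IHn, H; auto. Qed.

Lemma fsum_plus n f g : fsum n (fun i => f i + g i) = fsum n f + fsum n g.
Proof. induction n; simpl; [ring|rewrite IHn; ring]. Qed.

Lemma fsum_minus n f g : fsum n (fun i => f i - g i) = fsum n f - fsum n g.
Proof. induction n; simpl; [ring|rewrite IHn; ring]. Qed.

Lemma fsum_scal n c f : fsum n (fun i => c * f i) = c * fsum n f.
Proof. induction n; simpl; [ring|rewrite IHn; ring]. Qed.

Lemma fsum_scal_r n c f : fsum n (fun i => f i * c) = fsum n f * c.
Proof. induction n; simpl; [ring|rewrite IHn; ring]. Qed.

Lemma fsum_zero n f : (forall i, (i < n)%nat -> f i = 0) -> fsum n f = 0.
Proof. induction n; simpl; intros H; auto. rewrite IHn, H; auto; ring. Qed.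

Lemma fsum_le n f g : (forall i, (i < n)%nat -> f i <= g i) -> fsum n f <= fsum n g.
Proof. induction n; simpl; intros H; [lra|].
  assert (fsum n f <= fsum n g) by (apply IHn; intros; apply H; lia).
  specialize (H n (Nat.lt_succ_diag_r n)). lra. Qed.

Lemma fsum_nonneg n f : (forall i, (i < n)%nat -> 0 <= f i) -> 0 <= fsum n f.
Proof. intros H. rewrite <- (fsum_zero n (fun _ => 0)) by auto. apply fsum_le; auto. Qed.

Lemma fsum_swap n m (f : nat -> nat -> R) :
  fsum n (fun i => fsum m (fun j => f i j)) = fsum m (fun j => fsum n (fun i => f i j)).
Proof. induction n; simpl. - rewrite fsum_zero; auto.
  - rewrite IHn, <- fsum_plus. reflexivity. Qed.

Lemma fsum_abs n f : Rabs (fsum n f) <= fsum n (fun i => Rabs (f i)).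
Proof. induction n; simpl. - rewrite Rabs_R0; lra.
  - eapply Rle_trans; [apply Rabs_triang|]. lra. Qed.

Lemma fsum_ge_term n f k : (forall i, (i < n)%nat -> 0 <= f i) -> (k < n)%nat -> f k <= fsum n f.
Proof. induction n; simpl; intros H Hk; [lia|].
  assert (0 <= fsum n f) by (apply fsum_nonneg; auto).
  destruct (Nat.eq_dec k n). - subst. lra.
  - assert (f k <= fsum n f) by (apply IHn; auto; lia). assert (0 <= f n) by auto. lra. Qed.

Lemma fsum_ge_two n f j k : (forall i, (i < n)%nat -> 0 <= f i) -> (j < n)%nat -> (k < n)%nat ->
  j <> k -> f j + f k <= fsum n f.
Proof. induction n; simpl; intros H Hj Hk Hjk; [lia|].
  assert (0 <= fsum n f) by (apply fsum_nonneg; auto).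
  destruct (Nat.eq_dec k n); destruct (Nat.eq_dec j n); try lia.
  - subst. assert (f j <= fsum n f) by (apply fsum_ge_term; auto; lia). lra.
  - subst. assert (f k <= fsum n f) by (apply fsum_ge_term; auto; lia). lra.
  - assert (f j + f k <= fsum n f) by (apply IHn; auto; lia). assert (0 <= f n) by auto. lra. Qed.

Lemma fsum_const n c : fsum n (fun _ => c) = INR n * c.
Proof. induction n; simpl fsum. - simpl; ring. - rewrite IHn, S_INR. ring. Qed.

Lemma fsum_indic_neq n i : (i < n)%nat -> fsum n (fun k => if Nat.eqb k i then 0 else 1) = INR n - 1.
Proof. induction n; intros Hi; [lia|]. simpl fsum. rewrite S_INR.
  destruct (Nat.eq_dec i n).
  - subst. rewrite Nat.eqb_refl. rewrite (fsum_ext n _ (fun _ => 1)).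
    + rewrite fsum_const; ring.
    + intros k Hk. destruct (Nat.eqb_spec k n); [lia|auto].
  - rewrite IHn by lia. destruct (Nat.eqb_spec n i); [lia|]. ring. Qed.

Lemma fsum_single n f i : (i < n)%nat -> (forall k, (k < n)%nat -> k <> i -> f k = 0) -> fsum n f = f i.
Proof. induction n; intros Hi H; [lia|]. simpl.
  destruct (Nat.eq_dec i n).
  - subst. rewrite fsum_zero. ring. intros k Hk; apply H; lia.
  - rewrite IHn; [rewrite (H n) by lia; ring|lia|intros k Hk Hki; apply H; lia]. Qed.

Definition ip (m : nat) (a b : vec) : R := fsum m (fun k => a k * b k).

Lemma ip_comm m a b : ip m a b = ip m b a.
Proof. unfold ip; apply fsum_ext; intros; ring. Qed.

Lemma ip_nonneg m a : 0 <= ip m a a.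
Proof. apply fsum_nonneg; intros; apply Rle_0_sqr. Qed.

Lemma vnorm_ip m a : vnorm m a = sqrt (ip m a a).
Proof. unfold vnorm, ip. f_equal. apply fsum_ext; intros; ring. Qed.

Lemma vnorm_nonneg m a : 0 <= vnorm m a.
Proof. unfold vnorm; apply sqrt_pos. Qed.

Lemma vnorm_sq m a : vnorm m a * vnorm m a = ip m a a.
Proof. rewrite vnorm_ip. apply sqrt_sqrt, ip_nonneg. Qed.

Lemma ip_zero_l m a b : (forall k, (k < m)%nat -> a k = 0) -> ip m a b = 0.
Proof. intros H; unfold ip; apply fsum_zero; intros; rewrite H; auto; ring. Qed.

Lemma ip_self_zero m a : ip m a a = 0 -> forall k, (k < m)%nat -> a k = 0.
Proof. unfold ip. induction m; intros H k Hk; [lia|]. simpl in H.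
  assert (0 <= fsum m (fun k0 => a k0 * a k0)) by (apply fsum_nonneg; intros; apply Rle_0_sqr).
  assert (0 <= a m * a m) by apply Rle_0_sqr.
  destruct (Nat.eq_dec k m). - subst. nra.
  - apply IHm; [lra|lia]. Qed.

Lemma cauchy_schwarz m a b : ip m a b <= vnorm m a * vnorm m b.
Proof.
  destruct (Req_dec (vnorm m a) 0) as [Ha|Ha].
  - rewrite (ip_zero_l m a b). rewrite Ha; lra.
    apply ip_self_zero. rewrite <- vnorm_sq, Ha; ring.
  - destruct (Req_dec (vnorm m b) 0) as [Hb|Hb].
    + rewrite ip_comm, (ip_zero_l m b a). rewrite Hb; lra.
      apply ip_self_zero. rewrite <- vnorm_sq, Hb; ring.
    + set (na := vnorm m a) in *. set (nb := vnorm m b) in *.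
      assert (0 < na) by (pose proof (vnorm_nonneg m a); fold na in H; lra).
      assert (0 < nb) by (pose proof (vnorm_nonneg m b); fold nb in H0; lra).
      assert (Hs : 0 <= fsum m (fun k => (a k / na - b k / nb) * (a k / na - b k / nb))).
      { apply fsum_nonneg; intros; apply Rle_0_sqr. }
      rewrite (fsum_ext _ _ (fun k => (/ (na*na)) * (a k * a k) + (- 2 / (na * nb)) * (a k * b k) + (/(nb*nb)) * (b k * b k))) in Hs.
      2:{ intros; field; lra. }
      rewrite !fsum_plus, !fsum_scal in Hs. fold (ip m a a) (ip m a b) (ip m b b) in Hs.
      rewrite <- !vnorm_sq in Hs. fold na nb in Hs.
      assert (Hk: 0 <= 2 - 2 * ip m a b / (na * nb)).
      { replace (2 - 2 * ip m a b / (na * nb)) with (/ (na * na) * (na * na) + -2 / (na * nb) * ip m a b + / (nb * nb) * (nb * nb)) by (field; lra). auto. }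
      assert (ip m a b / (na * nb) <= 1) by lra.
      apply Rmult_le_reg_r with (/ (na*nb)). apply Rinv_0_lt_compat; nra.
      rewrite Rinv_r by nra. exact H1.
Qed.

Lemma cauchy_schwarz_abs m a b : Rabs (ip m a b) <= vnorm m a * vnorm m b.
Proof. apply Rabs_le. split. 2: apply cauchy_schwarz.
  assert (ip m (fun k => - a k) b <= vnorm m (fun k => - a k) * vnorm m b) by apply cauchy_schwarz.
  assert (E1 : ip m (fun k => - a k) b = - ip m a b).
  { replace (- ip m a b) with (-1 * ip m a b) by ring. unfold ip. rewrite <- (fsum_scal m (-1)). apply fsum_ext; intros; ring. }
  assert (E2 : vnorm m (fun k => - a k) = vnorm m a).
  { unfold vnorm; f_equal; apply fsum_ext; intros; ring. }
  rewrite E1, E2 in H. lra. Qed.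

Lemma minkowski m a b : vnorm m (vadd a b) <= vnorm m a + vnorm m b.
Proof.
  pose proof (vnorm_nonneg m a). pose proof (vnorm_nonneg m b). pose proof (vnorm_nonneg m (vadd a b)).
  apply Rsqr_incr_0_var; [|lra]. unfold Rsqr. rewrite vnorm_sq.
  assert (ip m (vadd a b) (vadd a b) = ip m a a + 2 * ip m a b + ip m b b).
  { unfold ip, vadd. rewrite <- fsum_scal, <- !fsum_plus. apply fsum_ext; intros; ring. }
  rewrite H2, <- !vnorm_sq. pose proof (cauchy_schwarz m a b). nra. Qed.

Lemma vnorm_ext m a b : (forall k, (k < m)%nat -> a k = b k) -> vnorm m a = vnorm m b.
Proof. intros H; unfold vnorm; f_equal; apply fsum_ext; intros; rewrite H; auto. Qed.

Lemma vnorm_sub_sym m a b : vnorm m (vsub a b) = vnorm m (vsub b a).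
Proof. unfold vnorm, vsub; f_equal; apply fsum_ext; intros; ring. Qed.

Lemma vnorm_triangle m a b c : vnorm m (vsub a c) <= vnorm m (vsub a b) + vnorm m (vsub b c).
Proof. rewrite (vnorm_ext m (vsub a c) (vadd (vsub a b) (vsub b c))).
  apply minkowski. intros; unfold vsub, vadd; ring. Qed.

Lemma vnorm_zero m : vnorm m (fun _ => 0) = 0.
Proof. unfold vnorm. rewrite fsum_zero. apply sqrt_0. intros; simpl; ring. Qed.

Lemma ip_mv_tr n m M v w : ip n (mv m M v) w = ip m v (mv n (mtr M) w).
Proof. unfold ip, mv, mtr.
  rewrite (fsum_ext n _ (fun i => fsum m (fun j => M i j * v j * w i))).
  2:{ intros; rewrite <- fsum_scal_r; apply fsum_ext; intros; ring. }
  rewrite fsum_swap. apply fsum_ext; intros. rewrite <- fsum_scal. apply fsum_ext; intros; ring. Qed.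

Lemma mv_mmul n m M1 M2 v i : mv n (mmul m M1 M2) v i = mv m M1 (mv n M2 v) i.
Proof. unfold mv, mmul.
  rewrite (fsum_ext n _ (fun j => fsum m (fun l => M1 i l * M2 l j * v j))).
  2:{ intros; rewrite <- fsum_scal_r; apply fsum_ext; intros; ring. }
  rewrite fsum_swap. apply fsum_ext; intros. rewrite <- fsum_scal. apply fsum_ext; intros; ring. Qed.

Lemma mv_ext m M v w i : (forall k, (k < m)%nat -> v k = w k) -> mv m M v i = mv m M w i.
Proof. intros H; unfold mv; apply fsum_ext; intros; rewrite H; auto. Qed.

Lemma mv_add m M v w i : mv m M (vadd v w) i = mv m M v i + mv m M w i.
Proof. unfold mv, vadd. rewrite <- fsum_plus; apply fsum_ext; intros; ring. Qed.
Lemma mv_sub m M v w i : mv m M (vsub v w) i = mv m M v i - mv m M w i.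
Proof. unfold mv, vsub. rewrite <- fsum_minus; apply fsum_ext; intros; ring. Qed.
Lemma mv_scale m M c v i : mv m M (vscale c v) i = c * mv m M v i.
Proof. unfold mv, vscale. rewrite <- fsum_scal; apply fsum_ext; intros; ring. Qed.
Lemma mv_vsum m M N g i : mv m M (vsum N g) i = fsum N (fun j => mv m M (g j) i).
Proof. unfold mv, vsum. rewrite (fsum_ext m _ (fun k => fsum N (fun j => M i k * g j k))).
  apply fsum_swap. intros; rewrite fsum_scal; auto. Qed.

Definition qf (n : nat) (M : mat) (v : vec) : R := ip n v (mv n M v).

Definition ext0 (t0 : R) (g g' : R -> R) : R -> R :=
  fun t => if Rle_dec t0 t then g t else g t0 + g' t0 * (t - t0).

Lemma bridge1 t0 g g' : deriv_on t0 g g' -> forall t, t0 <= t -> derivable_pt_lim (ext0 t0 g g') t (g' t).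
Proof.
  intros Hd t Ht eps Heps. destruct (Hd t Ht eps Heps) as [d [Hd0 Hd1]].
  destruct (Rle_lt_or_eq_dec _ _ Ht) as [Hlt|Heq].
  - assert (Hpos : 0 < Rmin d (t - t0)) by (apply Rmin_glb_lt; lra).
    exists (mkposreal _ Hpos). intros h Hh Hha. simpl in Hha.
    assert (Habs1 : Rabs h < d) by (eapply Rlt_le_trans; [exact Hha| apply Rmin_l]).
    assert (Habs2 : Rabs h < t - t0) by (eapply Rlt_le_trans; [exact Hha| apply Rmin_r]).
    assert (t0 <= t + h) by (pose proof (Rle_abs (-h)); rewrite Rabs_Ropp in H; lra).
    unfold ext0. destruct (Rle_dec t0 (t+h)); [|lra]. destruct (Rle_dec t0 t); [|lra].
    apply Hd1; auto.
  - subst t. exists (mkposreal _ Hd0). intros h Hh Hha. simpl in Hha.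
    unfold ext0. destruct (Rle_dec t0 t0); [|lra].
    destruct (Rle_dec t0 (t0 + h)).
    + apply Hd1; auto.
    + replace ((g t0 + g' t0 * (t0 + h - t0) - g t0) / h - g' t0) with 0 by (field; auto).
      rewrite Rabs_R0; auto.
Qed.

Lemma bridge2 t0 G g g' : (forall t, t0 <= t -> derivable_pt_lim G t (g' t)) ->
  (forall t, t0 <= t -> G t = g t) -> deriv_on t0 g g'.
Proof.
  intros Hd HG t Ht eps Heps. destruct (Hd t Ht eps Heps) as [d Hd1].
  exists d. split; [apply cond_pos|]. intros h Hh Hha Hth.
  rewrite <- !HG by auto. apply Hd1; auto.
Qed.

Lemma bridge_eq t0 g g' t : t0 <= t -> ext0 t0 g g' t = g t.
Proof. intros H; unfold ext0; destruct (Rle_dec t0 t); [auto|lra]. Qed.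

Lemma deriv_on_ext t0 g1 g2 d1 d2 : deriv_on t0 g1 d1 ->
  (forall t, t0 <= t -> g1 t = g2 t) -> (forall t, t0 <= t -> d1 t = d2 t) -> deriv_on t0 g2 d2.
Proof. intros Hd Hg Hdd. apply bridge2 with (ext0 t0 g1 d1).
  - intros t Ht. rewrite <- Hdd by auto. apply bridge1; auto.
  - intros t Ht. rewrite bridge_eq by auto. auto. Qed.

Lemma deriv_on_plus t0 g h dg dh : deriv_on t0 g dg -> deriv_on t0 h dh ->
  deriv_on t0 (fun t => g t + h t) (fun t => dg t + dh t).
Proof. intros Hg Hh. apply bridge2 with (ext0 t0 g dg + ext0 t0 h dh)%F.
  - intros t Ht. apply derivable_pt_lim_plus; apply bridge1; auto.
  - intros t Ht. unfold plus_fct. rewrite !bridge_eq; auto. Qed.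

Lemma deriv_on_minus t0 g h dg dh : deriv_on t0 g dg -> deriv_on t0 h dh ->
  deriv_on t0 (fun t => g t - h t) (fun t => dg t - dh t).
Proof. intros Hg Hh. apply bridge2 with (ext0 t0 g dg - ext0 t0 h dh)%F.
  - intros t Ht. apply derivable_pt_lim_minus; apply bridge1; auto.
  - intros t Ht. unfold minus_fct. rewrite !bridge_eq; auto. Qed.

Lemma deriv_on_mult t0 g h dg dh : deriv_on t0 g dg -> deriv_on t0 h dh ->
  deriv_on t0 (fun t => g t * h t) (fun t => dg t * h t + g t * dh t).
Proof. intros Hg Hh. apply bridge2 with (ext0 t0 g dg * ext0 t0 h dh)%F.
  - intros t Ht. rewrite <- (bridge_eq t0 g dg t), <- (bridge_eq t0 h dh t) by auto.
    apply derivable_pt_lim_mult; apply bridge1; auto.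
  - intros t Ht. unfold mult_fct. rewrite !bridge_eq; auto. Qed.

Lemma deriv_on_const t0 c : deriv_on t0 (fun _ => c) (fun _ => 0).
Proof. apply bridge2 with (fct_cte c). intros; apply derivable_pt_lim_const. auto. Qed.

Lemma deriv_on_scal t0 c g dg : deriv_on t0 g dg -> deriv_on t0 (fun t => c * g t) (fun t => c * dg t).
Proof. intros Hg. eapply deriv_on_ext. apply deriv_on_mult; [apply deriv_on_const|exact Hg].
  - intros; simpl; auto.
  - intros; simpl; ring. Qed.

Lemma deriv_on_fsum t0 n (g dg : nat -> R -> R) :
  (forall i, (i < n)%nat -> deriv_on t0 (g i) (dg i)) ->
  deriv_on t0 (fun t => fsum n (fun i => g i t)) (fun t => fsum n (fun i => dg i t)).
Proof. induction n; intros H; simpl.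
  - apply deriv_on_const.
  - apply deriv_on_plus; auto. Qed.

Lemma deriv_on_exp_lin t0 c : deriv_on t0 (fun t => exp (c * t)) (fun t => c * exp (c * t)).
Proof. apply bridge2 with (comp exp (fct_cte c * id)%F).
  - intros t Ht. replace (c * exp (c * t)) with (exp ((fct_cte c * id)%F t) * (0 * id t + fct_cte c t * 1)).
    2:{ unfold mult_fct, fct_cte, id. ring. }
    apply derivable_pt_lim_comp.
    + apply derivable_pt_lim_mult; [apply derivable_pt_lim_const|apply derivable_pt_lim_id].
    + apply derivable_pt_lim_exp.
  - intros; unfold comp, mult_fct, fct_cte, id; auto. Qed.

Lemma deriv_on_mono t0 g dg : deriv_on t0 g dg -> (forall t, t0 <= t -> dg t <= 0) ->
  forall a b, t0 <= a -> a <= b -> g b <= g a.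
Proof.
  intros Hd Hneg a b Ha Hab.
  destruct (Rle_lt_or_eq_dec _ _ Hab) as [Hlt|Heq]; [|subst; lra].
  set (G := ext0 t0 g dg).
  assert (HD : forall t, t0 <= t -> derivable_pt_lim G t (dg t)) by (apply bridge1; auto).
  destruct (Derive.MVT_gen G a b dg) as [c [[Hc1 Hc2] Hc]].
  - intros x [Hx1 Hx2]. apply Derive.is_derive_Reals. apply HD.
    rewrite Rmin_left in Hx1 by lra. lra.
  - intros x [Hx1 Hx2]. rewrite Rmin_left in Hx1 by lra.
    apply derivable_continuous_pt. exists (dg x). apply HD. lra.
  - rewrite Rmin_left in Hc1 by lra.
    unfold G in Hc. rewrite !bridge_eq in Hc by lra.
    assert (dg c <= 0) by (apply Hneg; lra). nra.
Qed.

Lemma exp_small g C eps : 0 < g -> 0 <= C -> 0 < eps -> exists T, forall t, T <= t -> C * exp (- g * t) < eps.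
Proof.
  intros Hg HC He. exists (ln ((C + 1) / eps) / g). intros t Ht.
  assert (Hq : 0 < (C + 1) / eps) by (apply Rdiv_lt_0_compat; lra).
  assert (H1 : exp (- g * t) <= eps / (C + 1)).
  { replace (eps / (C+1)) with (exp (- ln ((C + 1) / eps))).
    - apply exp_le_3 || idtac. destruct (Rle_lt_or_eq_dec (- g * t) (- ln ((C + 1) / eps))).
      + assert (g * t >= ln ((C+1)/eps)).
        { apply Rmult_le_compat_l with (r := g) in Ht; [|lra].
          replace (g * (ln ((C + 1) / eps) / g)) with (ln ((C + 1) / eps)) in Ht by (field; lra). lra. }
        lra.
      + left; apply exp_increasing; auto.
      + rewrite e; lra.
    - rewrite exp_Ropp, exp_ln by auto. field; lra. }
  pose proof (exp_pos (-g*t)).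
  assert (C * exp (- g * t) <= C * (eps / (C+1))) by (apply Rmult_le_compat_l; lra).
  assert (C * (eps / (C + 1)) < eps).
  { apply Rmult_lt_reg_r with (C+1); [lra|]. replace (C * (eps / (C + 1)) * (C + 1)) with (C * eps) by (field; lra). nra. }
  lra.
Qed.

Lemma comparison t0 V dV alpha beta phi : deriv_on t0 V dV -> (forall t, t0 <= t -> 0 <= V t) ->
  (forall t, t0 <= t -> dV t <= - alpha * V t + beta * exp (- phi * t)) ->
  0 < alpha -> 0 < phi -> 0 <= beta -> tends_to_0 V.
Proof.
  intros Hd Hpos Hb Ha Hp Hbeta.
  set (g := Rmin alpha phi / 2).
  assert (Hg0 : 0 < g) by (unfold g; assert (0 < Rmin alpha phi) by (apply Rmin_glb_lt; lra); lra).
  assert (Hga : g < alpha) by (unfold g; pose proof (Rmin_l alpha phi); lra).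
  assert (Hgp : g < phi) by (unfold g; pose proof (Rmin_r alpha phi); lra).
  set (k := beta / (phi - g)).
  assert (Hk : 0 <= k) by (unfold k; apply Rmult_le_pos; [lra|left; apply Rinv_0_lt_compat; lra]).
  set (G := fun t => exp (g * t) * V t + k * exp ((g - phi) * t)).
  assert (HG : deriv_on t0 G (fun t => (g * exp (g * t) * V t + exp (g * t) * dV t) + k * ((g - phi) * exp ((g - phi) * t)))).
  { apply deriv_on_plus. apply deriv_on_mult; [apply deriv_on_exp_lin|auto].
    apply deriv_on_scal, deriv_on_exp_lin. }
  assert (Hmono : forall t, t0 <= t -> G t <= G t0).
  { intros t Ht. apply (deriv_on_mono _ _ _ HG); auto; [|lra].
    intros s Hs. specialize (Hb s Hs). specialize (Hpos s Hs).
    assert (E : exp ((g - phi) * s) = exp (g * s) * exp (- phi * s)).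
    { rewrite <- exp_plus. f_equal; ring. }
    rewrite E. unfold k.
    assert (0 < exp (g * s)) by apply exp_pos.
    replace (g * exp (g * s) * V s + exp (g * s) * dV s + beta / (phi - g) * ((g - phi) * (exp (g * s) * exp (- phi * s))))
      with (exp (g * s) * (g * V s + dV s - beta * exp (- phi * s))) by (field; lra).
    assert (g * V s + dV s - beta * exp (- phi * s) <= 0) by nra.
    nra. }
  intros eps He.
  assert (HC : 0 <= G t0).
  { unfold G. pose proof (exp_pos (g*t0)). pose proof (exp_pos ((g-phi)*t0)). specialize (Hpos t0 (Rle_refl _)). nra. }
  destruct (exp_small g (G t0) eps Hg0 HC He) as [T HT].
  exists (Rmax T t0). intros t Ht.
  assert (HtT : T <= t) by (eapply Rle_trans; [apply Rmax_l|exact Ht]).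
  assert (Ht0 : t0 <= t) by (eapply Rle_trans; [apply Rmax_r|exact Ht]).
  specialize (HT t HtT). specialize (Hmono t Ht0). specialize (Hpos t Ht0).
  rewrite Rabs_right by lra.
  assert (exp (g * t) * V t <= G t0).
  { unfold G in Hmono. pose proof (exp_pos ((g - phi) * t)). unfold G. nra. }
  assert (V t = (exp (g * t) * V t) * exp (- g * t)).
  { rewrite Rmult_assoc, (Rmult_comm (V t)), <- Rmult_assoc, <- exp_plus.
    replace (g * t + - g * t) with 0 by ring. rewrite exp_0; ring. }
  pose proof (exp_pos (- g * t)). nra.
Qed.

Lemma gronwall_zero t0 W dW a : deriv_on t0 W dW -> (forall t, t0 <= t -> 0 <= W t) ->
  (forall t, t0 <= t -> dW t <= a * W t) -> W t0 = 0 -> forall t, t0 <= t -> W t = 0.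
Proof.
  intros Hd Hpos Hb H0 t Ht.
  set (G := fun t => exp (- a * t) * W t).
  assert (HG : deriv_on t0 G (fun t => - a * exp (- a * t) * W t + exp (- a * t) * dW t)).
  { apply deriv_on_mult; [apply deriv_on_exp_lin|auto]. }
  assert (G t <= G t0).
  { apply (deriv_on_mono _ _ _ HG); auto; [|lra].
    intros s Hs. specialize (Hb s Hs). pose proof (exp_pos (-a*s)). nra. }
  unfold G in H. rewrite H0 in H. pose proof (exp_pos (-a*t)). specialize (Hpos t Ht).
  assert (exp (- a * t) * W t = 0) by nra. nra.
Qed.

Lemma Rabs_le_inv x a : Rabs x <= a -> -a <= x <= a.
Proof. intros H. pose proof (Rle_abs x). pose proof (Rle_abs (-x)). rewrite Rabs_Ropp in H1. lra. Qed.

Lemma cv_const c : Un_cv (fun _ => c) c.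
Proof. intros e He. exists 0%nat. intros. unfold R_dist. rewrite Rminus_diag, Rabs_R0; auto. Qed.

Lemma strict_mono (phi : nat -> nat) : (forall k, (phi k < phi (S k))%nat) -> forall a b, (a < b)%nat -> (phi a < phi b)%nat.
Proof. intros H a b Hab. induction Hab. apply H. specialize (H m). lia. Qed.

Lemma strict_mono_ge (phi : nat -> nat) : (forall k, (phi k < phi (S k))%nat) -> forall k, (k <= phi k)%nat.
Proof. intros H k. induction k; [lia|]. specialize (H k). lia. Qed.

Lemma cv_subseq u l (phi : nat -> nat) : (forall k, (phi k < phi (S k))%nat) -> Un_cv u l -> Un_cv (fun k => u (phi k)) l.
Proof. intros Hp Hc e He. destruct (Hc e He) as [N HN]. exists N. intros n Hn.
  apply HN. pose proof (strict_mono_ge phi Hp n). lia. Qed.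

Lemma sub1D (u : nat -> R) : (forall k, Rabs (u k) <= 1) ->
  exists phi : nat -> nat, (forall k, (phi k < phi (S k))%nat) /\ exists l, Un_cv (fun k => u (phi k)) l.
Proof.
  intros Hb.
  destruct (Bolzano_Weierstrass u (fun c => -1 <= c <= 1) (compact_P3 (-1) 1)) as [l Hl].
  { intros n. apply Rabs_le_inv, Hb. }
  assert (Hsel : forall N k : nat, exists p, (N <= p)%nat /\ Rabs (u p - l) < / (INR k + 1)).
  { intros N k. assert (Hpos : 0 < / (INR k + 1)) by (apply Rinv_0_lt_compat; pose proof (pos_INR k); lra).
    destruct (Hl (fun y => Rabs (y - l) < / (INR k + 1)) N) as [p Hp].
    - exists (mkposreal _ Hpos). intros y Hy. exact Hy.
    - exists p; exact Hp. }
  set (sel := fun N k => proj1_sig (constructive_indefinite_description _ (Hsel N k))).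
  assert (Hsel1 : forall N k, (N <= sel N k)%nat /\ Rabs (u (sel N k) - l) < / (INR k + 1)).
  { intros N k. unfold sel. destruct (constructive_indefinite_description _ (Hsel N k)); auto. }
  set (phi := fix phi k := match k with O => sel O O | S k' => sel (S (phi k')) (S k') end).
  exists phi. split.
  - intros k. simpl. destruct (Hsel1 (S (phi k)) (S k)). lia.
  - exists l. intros e He.
    destruct (archimed (/ e)) as [Ha _].
    assert (H0 : (0 <= up (/ e))%Z).
    { apply le_IZR. pose proof (Rinv_0_lt_compat e He). lra. }
    exists (Z.to_nat (up (/ e))). intros n Hn.
    assert (Hun : Rabs (u (phi n) - l) < / (INR n + 1)).
    { destruct n; simpl; [apply (Hsel1 0%nat 0%nat)|apply (Hsel1 _ (S n))]. }
    unfold R_dist. eapply Rlt_le_trans; [exact Hun|].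
    assert (INR (Z.to_nat (up (/ e))) = IZR (up (/ e))) by (rewrite INR_IZR_INZ, Z2Nat.id; auto).
    apply le_INR in Hn. rewrite H in Hn.
    apply Rle_trans with (/ (/ e)).
    + apply Rinv_le_contravar. apply Rinv_0_lt_compat; auto. lra.
    + rewrite Rinv_inv; lra.
Qed.

Lemma subND (N : nat) (u : nat -> vec) : (forall k i, (i < N)%nat -> Rabs (u k i) <= 1) ->
  exists phi : nat -> nat, (forall k, (phi k < phi (S k))%nat) /\
    exists l : vec, forall i, (i < N)%nat -> Un_cv (fun k => u (phi k) i) (l i).
Proof.
  induction N; intros Hb.
  - exists (fun k => k). split; [intros; lia|]. exists (fun _ => 0). intros; lia.
  - destruct IHN as [phi [Hphi [l Hl]]]. { intros; apply Hb; lia. }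
    destruct (sub1D (fun k => u (phi k) N)) as [psi [Hpsi [lN HlN]]]. { intros; apply Hb; lia. }
    exists (fun k => phi (psi k)). split.
    + intros k. apply strict_mono; auto.
    + exists (fun i => if Nat.eqb i N then lN else l i). intros i Hi.
      destruct (Nat.eqb_spec i N).
      * subst. exact HlN.
      * apply (cv_subseq (fun k => u (phi k) i)); auto. apply Hl; lia.
Qed.

Lemma cv_fsum n (g : nat -> nat -> R) (L : nat -> R) :
  (forall i, (i < n)%nat -> Un_cv (fun k => g k i) (L i)) ->
  Un_cv (fun k => fsum n (fun i => g k i)) (fsum n L).
Proof. induction n; intros H; simpl. - apply cv_const.
  - apply CV_plus; auto. Qed.

Lemma cv_ip n (u v : nat -> vec) (a b : vec) :
  (forall i, (i < n)%nat -> Un_cv (fun k => u k i) (a i)) ->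
  (forall i, (i < n)%nat -> Un_cv (fun k => v k i) (b i)) ->
  Un_cv (fun k => ip n (u k) (v k)) (ip n a b).
Proof. intros Hu Hv. unfold ip. apply (cv_fsum n (fun k i => u k i * v k i)).
  intros; apply CV_mult; auto. Qed.

Lemma cv_mv n M (u : nat -> vec) (a : vec) :
  (forall i, (i < n)%nat -> Un_cv (fun k => u k i) (a i)) ->
  forall j, Un_cv (fun k => mv n M (u k) j) (mv n M a j).
Proof. intros Hu j. unfold mv. apply (cv_fsum n (fun k i => M j i * u k i)).
  intros; apply CV_mult; auto. apply cv_const. Qed.

Lemma coord_bound n v i : ip n v v = 1 -> (i < n)%nat -> Rabs (v i) <= 1.
Proof. intros H Hi.
  assert (v i * v i <= 1).
  { rewrite <- H. unfold ip. apply (fsum_ge_term n (fun k => v k * v k)); auto. intros; apply Rle_0_sqr. }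
  apply Rabs_le. nra. Qed.

Lemma qf_bound n M v : ip n v v = 1 -> Rabs (qf n M v) <= fsum n (fun i => fsum n (fun j => Rabs (M i j))).
Proof. intros H. unfold qf, ip, mv. eapply Rle_trans; [apply fsum_abs|]. apply fsum_le; intros i Hi.
  rewrite <- fsum_scal. eapply Rle_trans; [apply fsum_abs|]. apply fsum_le; intros j Hj.
  rewrite !Rabs_mult. pose proof (coord_bound n v i H Hi). pose proof (coord_bound n v j H Hj).
  pose proof (Rabs_pos (v i)). pose proof (Rabs_pos (v j)). pose proof (Rabs_pos (M i j)).
  assert (Rabs (v i) * (Rabs (M i j) * Rabs (v j)) <= 1 * (Rabs (M i j) * 1)).
  { apply Rmult_le_compat; try nra. }
  lra. Qed.

Lemma qf_min n M c : (exists v, ip n v v = 1 /\ ip n c v = 0) ->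
  exists v, ip n v v = 1 /\ ip n c v = 0 /\ forall w, ip n w w = 1 -> ip n c w = 0 -> qf n M v <= qf n M w.
Proof.
  intros Hne.
  set (S := fun w => ip n w w = 1 /\ ip n c w = 0).
  set (B := fsum n (fun i => fsum n (fun j => Rabs (M i j)))).
  set (E := fun r => exists w, S w /\ r = - qf n M w).
  destruct (completeness E) as [m [Hub Hlub]].
  { exists B. intros r [w [[Hw1 Hw2] ->]]. pose proof (qf_bound n M w Hw1). fold B in H.
    apply Rabs_le_inv in H. lra. }
  { destruct Hne as [v Hv]. exists (- qf n M v). exists v; split; auto. }
  assert (Hlow : forall w, S w -> - m <= qf n M w).
  { intros w Hw. assert (E (- qf n M w)) by (exists w; auto). apply Hub in H. lra. }
  assert (Hseq : forall k : nat, exists w, S w /\ qf n M w < - m + / (INR k + 1)).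
  { intros k. apply NNPP. intros Hno.
    assert (Hpos : 0 < / (INR k + 1)) by (apply Rinv_0_lt_compat; pose proof (pos_INR k); lra).
    assert (is_upper_bound E (m - / (INR k + 1))).
    { intros r [w [Hw ->]]. apply Rnot_lt_le. intros Hc. apply Hno. exists w. split; auto. lra. }
    apply Hlub in H. lra. }
  set (v := fun k => proj1_sig (constructive_indefinite_description _ (Hseq k))).
  assert (Hv : forall k, S (v k) /\ qf n M (v k) < - m + / (INR k + 1)).
  { intros k. unfold v. destruct (constructive_indefinite_description _ (Hseq k)); auto. }
  destruct (subND n v) as [phi [Hphi [l Hl]]].
  { intros k i Hi. apply (coord_bound n); auto. apply (Hv k). }
  assert (HlS : S l).
  { split.
    - apply (UL_sequence (fun k => ip n (v (phi k)) (v (phi k)))).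
      + apply cv_ip; auto.
      + eapply Un_cv_ext; [|apply cv_const]. intros k; simpl. symmetry; apply (Hv (phi k)).
    - apply (UL_sequence (fun k => ip n c (v (phi k)))).
      + apply cv_ip; auto. intros; apply cv_const.
      + eapply Un_cv_ext; [|apply cv_const]. intros k; simpl. symmetry; apply (Hv (phi k)). }
  assert (Hq : qf n M l = - m).
  { apply (UL_sequence (fun k => qf n M (v (phi k)))).
    - unfold qf. apply cv_ip; auto. intros; apply cv_mv; auto.
    - intros e He.
      destruct (archimed (/ e)) as [Ha _].
      assert (H0 : (0 <= up (/ e))%Z).
      { apply le_IZR. pose proof (Rinv_0_lt_compat e He). lra. }
      exists (Z.to_nat (up (/ e))). intros k Hk.
      destruct (Hv (phi k)) as [HS Hlt]. pose proof (Hlow _ HS).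
      pose proof (strict_mono_ge phi Hphi k).
      assert (INR (Z.to_nat (up (/ e))) = IZR (up (/ e))) by (rewrite INR_IZR_INZ, Z2Nat.id; auto).
      assert (Hk' : / e < INR (phi k) + 1).
      { apply le_INR in Hk. apply le_INR in H1. lra. }
      assert (/ (INR (phi k) + 1) < e).
      { rewrite <- (Rinv_inv e). apply Rinv_lt_contravar; [|auto].
        apply Rmult_lt_0_compat; [apply Rinv_0_lt_compat; auto| pose proof (pos_INR (phi k)); lra]. }
      unfold R_dist. rewrite Rabs_right by lra. lra. }
  exists l. destruct HlS as [Hl1 Hl2]. split; [auto|split; [auto|]].
  intros w Hw1 Hw2. rewrite Hq. apply Hlow. split; auto.
Qed.

Definition aind (adj : nat -> nat -> bool) (i j : nat) : R := if adj i j then 1 else 0.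

Lemma aind_nonneg adj i j : 0 <= aind adj i j.
Proof. unfold aind; destruct (adj i j); lra. Qed.

Definition lapq (N : nat) (adj : nat -> nat -> bool) (z : vec) : R :=
  fsum N (fun i => fsum N (fun j => aind adj i j * ((z i - z j) * (z i - z j)))).

Lemma lapq_nonneg N adj z : 0 <= lapq N adj z.
Proof. apply fsum_nonneg; intros; apply fsum_nonneg; intros.
  apply Rmult_le_pos; [apply aind_nonneg|apply Rle_0_sqr]. Qed.

Lemma swap_sym N adj (G : nat -> nat -> R) : simple_undirected N adj ->
  fsum N (fun i => fsum N (fun j => aind adj i j * G i j)) =
  fsum N (fun i => fsum N (fun j => aind adj i j * G j i)).
Proof. intros [Hs _]. rewrite fsum_swap. apply fsum_ext; intros i Hi. apply fsum_ext; intros j Hj.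
  unfold aind. rewrite Hs by auto. reflexivity. Qed.

Lemma lap_mv N adj z i : (i < N)%nat ->
  mv N (laplacian N adj) z i = fsum N (fun j => aind adj i j * (z i - z j)).
Proof. intros Hi. unfold mv, laplacian.
  rewrite (fsum_ext N _ (fun j => (if Nat.eqb i j then degree N adj i * z j else 0) - aind adj i j * z j)).
  2:{ intros j Hj. unfold aind. destruct (Nat.eqb i j); ring. }
  rewrite fsum_minus. rewrite (fsum_single N _ i Hi).
  2:{ intros k Hk Hki. destruct (Nat.eqb_spec i k); [lia|auto]. }
  rewrite Nat.eqb_refl. replace (degree N adj i) with (fsum N (fun j => aind adj i j)) by reflexivity.
  rewrite <- fsum_scal_r, <- fsum_minus. apply fsum_ext; intros; ring. Qed.

Lemma lap_qf N adj z : simple_undirected N adj ->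
  qf N (laplacian N adj) z = / 2 * lapq N adj z.
Proof. intros Hs. unfold qf, ip, lapq.
  rewrite (fsum_ext N _ (fun i => fsum N (fun j => aind adj i j * (z i * z i - z i * z j)))).
  2:{ intros i Hi. rewrite lap_mv by auto. rewrite <- fsum_scal. apply fsum_ext; intros; ring. }
  rewrite (fsum_ext N (fun i => fsum N (fun j => aind adj i j * ((z i - z j) * (z i - z j))))
     (fun i => fsum N (fun j => aind adj i j * (z i * z i - z i * z j)) + fsum N (fun j => aind adj i j * (z j * z j - z j * z i)))).
  2:{ intros; rewrite <- fsum_plus; apply fsum_ext; intros; ring. }
  rewrite fsum_plus. rewrite (swap_sym N adj (fun i j => z j * z j - z j * z i)) by auto. field. Qed.

Lemma lap_sum N adj z : simple_undirected N adj -> fsum N (mv N (laplacian N adj) z) = 0.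
Proof. intros Hs. rewrite (fsum_ext N _ (fun i => fsum N (fun j => aind adj i j * (z i - z j)))) by (intros; apply lap_mv; auto).
  assert (H := swap_sym N adj (fun i j => z i - z j) Hs). simpl in H.
  assert (fsum N (fun i => fsum N (fun j => aind adj i j * (z j - z i))) = - fsum N (fun i => fsum N (fun j => aind adj i j * (z i - z j)))).
  { match goal with |- _ = - ?X => replace (- X) with (-1 * X) by ring end. rewrite <- fsum_scal. apply fsum_ext; intros.
    rewrite <- fsum_scal. apply fsum_ext; intros; ring. }
  lra. Qed.

Lemma lap_sym N adj v w : simple_undirected N adj ->
  ip N v (mv N (laplacian N adj) w) = ip N w (mv N (laplacian N adj) v).
Proof. intros Hs. rewrite ip_comm, ip_mv_tr. unfold ip; apply fsum_ext; intros i Hi. f_equal.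
  unfold mv; apply fsum_ext; intros j Hj. f_equal. unfold mtr, laplacian.
  destruct Hs as [Hs _]. rewrite Hs by auto. destruct (Nat.eqb_spec j i); destruct (Nat.eqb_spec i j); subst; try lia; auto. Qed.

Lemma qf_scale n M c v : qf n M (vscale c v) = c * c * qf n M v.
Proof. unfold qf, ip. rewrite <- fsum_scal. apply fsum_ext; intros. rewrite mv_scale. unfold vscale; ring. Qed.

Lemma ip_scale n c v w : ip n (vscale c v) w = c * ip n v w.
Proof. unfold ip, vscale. rewrite <- fsum_scal. apply fsum_ext; intros; ring. Qed.

Lemma ip_scale_r n c v w : ip n v (vscale c w) = c * ip n v w.
Proof. unfold ip, vscale. rewrite <- fsum_scal. apply fsum_ext; intros; ring. Qed.

Lemma sum_zero_terms n f : (forall i, (i < n)%nat -> 0 <= f i) -> fsum n f = 0 -> forall i, (i < n)%nat -> f i = 0.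
Proof. intros H Hs i Hi. pose proof (fsum_ge_term n f i H Hi). pose proof (H i Hi). lra. Qed.

Lemma conn_const N adj (v : vec) : connected N adj ->
  (forall i j, (i < N)%nat -> (j < N)%nat -> adj i j = true -> v i = v j) ->
  forall i j, (i < N)%nat -> (j < N)%nat -> v i = v j.
Proof. intros Hc H i j Hi Hj. specialize (Hc i j Hi Hj).
  assert (G : forall x y, clos_refl_trans nat (edge N adj) x y -> (x < N)%nat -> (y < N)%nat /\ v x = v y).
  { intros x y Hxy. induction Hxy; intros Hx.
    - destruct H0 as [? [? ?]]. split; auto.
    - auto.
    - destruct (IHHxy1 Hx). destruct (IHHxy2 H0). split; congruence. }
  apply G; auto. Qed.

Lemma ip_pos_of_nz n v : (exists k, (k < n)%nat /\ v k <> 0) -> 0 < ip n v v.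
Proof. intros [k [Hk Hv]]. eapply Rlt_le_trans; [|apply (fsum_ge_term n (fun i => v i * v i) k); auto].
  - simpl. assert (0 < v k * v k) by (apply Rsqr_pos_lt; auto). exact H.
  - intros; apply Rle_0_sqr. Qed.

Lemma lam2_pos N adj lam2 : simple_undirected N adj -> smallest_nonzero_eigenvalue N (laplacian N adj) lam2 -> 0 < lam2.
Proof. intros Hs [[v [Hnz Hev]] [Hne _]].
  assert (qf N (laplacian N adj) v = lam2 * ip N v v).
  { unfold qf, ip. rewrite <- fsum_scal. apply fsum_ext; intros. rewrite Hev by auto. ring. }
  rewrite lap_qf in H by auto. pose proof (lapq_nonneg N adj v). pose proof (ip_pos_of_nz N v Hnz).
  assert (0 <= lam2) by nra. lra. Qed.

Definition ones : vec := fun _ => 1.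

Lemma ip_ones n v : ip n ones v = fsum n v.
Proof. unfold ip, ones; apply fsum_ext; intros; ring. Qed.

Lemma fiedler N adj lam2 z : simple_undirected N adj -> connected N adj ->
  smallest_nonzero_eigenvalue N (laplacian N adj) lam2 -> fsum N z = 0 ->
  lam2 * ip N z z <= / 2 * lapq N adj z.
Proof.
  intros Hs Hc Hl Hz. pose proof (lam2_pos N adj lam2 Hs Hl).
  set (L := laplacian N adj).
  destruct (Req_dec (ip N z z) 0) as [H0|H0].
  { rewrite H0. pose proof (lapq_nonneg N adj z). lra. }
  pose proof (ip_nonneg N z).
  destruct (qf_min N L ones) as [v [Hv1 [Hv2 Hmin]]].
  { exists (vscale (/ sqrt (ip N z z)) z). split.
    - rewrite ip_scale, ip_scale_r. assert (0 < sqrt (ip N z z)) by (apply sqrt_lt_R0; lra).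
      assert (sqrt (ip N z z) * sqrt (ip N z z) = ip N z z) by (apply sqrt_sqrt; lra).
      rewrite <- H3 at 3. field. lra.
    - rewrite ip_scale_r, ip_ones, Hz. ring. }
  set (mu := qf N L v).
  assert (Hge : forall w, ip N ones w = 0 -> mu * ip N w w <= qf N L w).
  { intros w Hw. destruct (Req_dec (ip N w w) 0) as [Hw0|Hw0].
    - rewrite Hw0. unfold qf. rewrite ip_zero_l. lra. apply ip_self_zero; auto.
    - pose proof (ip_nonneg N w). set (c := / sqrt (ip N w w)).
      assert (Hsq : sqrt (ip N w w) * sqrt (ip N w w) = ip N w w) by (apply sqrt_sqrt; lra).
      assert (0 < sqrt (ip N w w)) by (apply sqrt_lt_R0; lra).
      assert (Hcc : c * c * ip N w w = 1) by (unfold c; rewrite <- Hsq at 3; field; lra).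
      specialize (Hmin (vscale c w)).
      rewrite ip_scale, ip_scale_r, qf_scale in Hmin.
      rewrite ip_scale_r, Hw in Hmin.
      specialize (Hmin ltac:(lra) ltac:(lra)). fold mu in Hmin.
      assert (0 < c * c) by (unfold c; apply Rmult_lt_0_compat; apply Rinv_0_lt_compat; lra).
      apply Rmult_le_reg_l with (c * c); auto.
      replace (c*c*(mu*ip N w w)) with (mu * (c*c*ip N w w)) by ring. rewrite Hcc. lra. }
  set (w := vsub (mv N L v) (vscale mu v)).
  assert (Hw1 : ip N ones w = 0).
  { rewrite ip_ones. unfold w, vsub, vscale. rewrite fsum_minus, fsum_scal. unfold L. rewrite lap_sum by auto.
    rewrite <- ip_ones, Hv2. ring. }
  assert (Hww : ip N w w = 0).
  { set (c0 := ip N w w). set (D := qf N L w - mu * ip N w w).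
    assert (HD : 0 <= D) by (unfold D; pose proof (Hge w Hw1); lra).
    pose proof (ip_nonneg N w). fold c0 in H2.
    set (s := - c0 / (D + 1)).
    set (x := vadd v (vscale s w)).
    assert (Hx : ip N ones x = 0).
    { rewrite ip_ones. unfold x, vadd, vscale. rewrite fsum_plus, fsum_scal, <- !ip_ones, Hv2, Hw1. ring. }
    specialize (Hge x Hx).
    assert (E1 : ip N x x = 1 + 2 * s * ip N w v + s * s * c0).
    { unfold x, ip, vadd, vscale. unfold ip in Hv1. rewrite <- Hv1. unfold c0, ip.
      rewrite <- !fsum_scal, <- !fsum_plus. apply fsum_ext; intros; ring. }
    assert (E2 : qf N L x = mu + 2 * s * ip N w (mv N L v) + s * s * qf N L w).
    { unfold mu. assert (Hsy := lap_sym N adj v w Hs). fold L in Hsy.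
      unfold qf in *. unfold x.
      assert (forall i, mv N L (vadd v (vscale s w)) i = mv N L v i + s * mv N L w i).
      { intros i. rewrite mv_add, mv_scale. auto. }
      unfold ip in *. rewrite (fsum_ext N _ (fun i => v i * mv N L v i + s * (v i * mv N L w i) + s * (w i * mv N L v i) + s * s * (w i * mv N L w i))).
      2:{ intros. rewrite H3. unfold vadd, vscale. ring. }
      rewrite !fsum_plus, !fsum_scal. rewrite Hsy. ring. }
    assert (E3 : ip N w (mv N L v) - mu * ip N w v = c0).
    { unfold c0, w, ip, vsub, vscale. rewrite <- fsum_scal, <- fsum_minus. apply fsum_ext; intros; ring. }
    rewrite E1, E2 in Hge.
    assert (Hq : 0 <= 2 * s * c0 + s * s * D).
    { assert (HH : 2*s*(ip N w (mv N L v) - mu * ip N w v) + s*s*(qf N L w - mu * c0) = (mu + 2 * s * ip N w (mv N L v) + s * s * qf N L w) - mu * (1 + 2 * s * ip N w v + s * s * c0)) by ring.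
      rewrite E3 in HH. unfold D. fold c0. lra. }
    unfold s in Hq.
    assert (0 <= c0 * c0 * (- D - 2) / ((D+1)*(D+1))).
    { replace (c0 * c0 * (- D - 2) / ((D + 1) * (D + 1))) with (2 * (- c0 / (D + 1)) * c0 + - c0 / (D + 1) * (- c0 / (D + 1)) * D) by (field; lra). auto. }
    assert (0 < (D+1)*(D+1)) by nra.
    assert (0 <= c0 * c0 * (- D - 2)).
    { apply Rmult_le_reg_r with (/ ((D+1)*(D+1))). apply Rinv_0_lt_compat; auto. rewrite Rmult_0_l. exact H3. }
    nra. }
  assert (Hev : forall i, (i < N)%nat -> mv N L v i = mu * v i).
  { intros i Hi. pose proof (ip_self_zero N w Hww i Hi). unfold w, vsub, vscale in H2. lra. }
  assert (Hvnz : exists k, (k < N)%nat /\ v k <> 0).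
  { apply NNPP. intros Hn. assert (ip N v v = 0).
    { apply ip_zero_l. intros k Hk. apply NNPP. intros Hk'. apply Hn. exists k; auto. }
    lra. }
  assert (Hmu0 : mu <> 0).
  { intros Hm. assert (Hq : lapq N adj v = 0).
    { assert (qf N L v = 0) by (fold mu; auto). unfold L in H2. rewrite lap_qf in H2 by auto. lra. }
    assert (Hadj : forall i j, (i < N)%nat -> (j < N)%nat -> adj i j = true -> v i = v j).
    { intros i j Hi Hj Ha.
      assert (Hi0 := sum_zero_terms N _ (fun i _ => fsum_nonneg _ _ (fun j _ => Rmult_le_pos _ _ (aind_nonneg adj i j) (Rle_0_sqr (v i - v j)))) Hq i Hi).
      simpl in Hi0.
      assert (Hj0 := sum_zero_terms N _ (fun j _ => Rmult_le_pos _ _ (aind_nonneg adj i j) (Rle_0_sqr (v i - v j))) Hi0 j Hj).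
      simpl in Hj0. unfold aind in Hj0. rewrite Ha in Hj0. 
      unfold Rsqr in Hj0. assert (Hz0 : (v i - v j) * (v i - v j) = 0) by lra. apply Rmult_integral in Hz0. destruct Hz0; lra. }
    destruct Hvnz as [k [Hk Hvk]].
    assert (Hall : forall i, (i < N)%nat -> v i = v k) by (intros; apply (conn_const N adj v Hc Hadj); auto).

    assert (fsum N v = INR N * v k) by (rewrite <- fsum_const; apply fsum_ext; auto).
    rewrite ip_ones in Hv2. rewrite Hv2 in H2.
    assert (0 < INR N) by (apply lt_0_INR; lia). nra. }
  assert (Hlm : lam2 <= mu).
  { destruct Hl as [_ [_ Hl]]. apply Hl; auto. exists v. split; auto. }
  assert (mu * ip N z z <= qf N L z) by (apply Hge; rewrite ip_ones; auto).
  unfold L in H2. rewrite lap_qf in H2 by auto. nra.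
Qed.



Local Open Scope bool_scope.
Definition bind (b : bool) : R := if b then 1 else 0.

Definition Eset N adj (D : nat -> nat -> R) (T : nat -> bool) : R :=
  fsum N (fun x => fsum N (fun y => bind (T x && T y) * (aind adj x y * D x y))).

Fixpoint cntf (N : nat) (T : nat -> bool) : nat :=
  match N with O => O | S M => (cntf M T + (if T M then 0 else 1))%nat end.

Lemma cntf_lt N T b : (b < N)%nat -> T b = false ->
  (cntf N (fun z => T z || Nat.eqb z b) < cntf N T)%nat.
Proof. induction N; intros Hb HT; [lia|]. simpl.
  assert (Hle : forall M, (cntf M (fun z => T z || Nat.eqb z b) <= cntf M T)%nat).
  { induction M; simpl; [lia|]. destruct (T M); simpl; [lia|]. destruct (Nat.eqb M b); lia. }
  destruct (Nat.eq_dec b N).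
  - subst. rewrite HT, Nat.eqb_refl. simpl. specialize (Hle N). lia.
  - assert (cntf N (fun z => T z || Nat.eqb z b) < cntf N T)%nat by (apply IHN; auto; lia).
    destruct (T N); simpl; [lia|]. destruct (Nat.eqb N b); lia. Qed.

Lemma crossing N adj (T : nat -> bool) x y : clos_refl_trans_1n nat (edge N adj) x y ->
  T x = true -> T y = false -> exists a b, (a < N)%nat /\ (b < N)%nat /\ adj a b = true /\ T a = true /\ T b = false.
Proof. intros H. induction H; intros Hx Hy.
  - congruence.
  - destruct H as [Hxn [Hyn Ha]]. destruct (T y) eqn:Ey.
    + apply IHclos_refl_trans_1n; auto.
    + exists x, y. auto. Qed.

Lemma Eset_le_tot N adj D T : (forall a b, (a < N)%nat -> (b < N)%nat -> 0 <= D a b) ->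
  Eset N adj D T <= fsum N (fun x => fsum N (fun y => aind adj x y * D x y)).
Proof. intros HD. apply fsum_le; intros; apply fsum_le; intros.
  assert (0 <= aind adj i i0 * D i i0) by (apply Rmult_le_pos; [apply aind_nonneg|auto]).
  unfold bind; destruct (T i && T i0); lra. Qed.

Lemma Eset_nonneg N adj D T : (forall a b, (a < N)%nat -> (b < N)%nat -> 0 <= D a b) -> 0 <= Eset N adj D T.
Proof. intros HD. apply fsum_nonneg; intros; apply fsum_nonneg; intros.
  assert (0 <= aind adj i i0 * D i i0) by (apply Rmult_le_pos; [apply aind_nonneg|auto]).
  unfold bind; destruct (T i && T i0); lra. Qed.

Lemma Eset_step N adj D T a b : simple_undirected N adj ->
  (forall a b, (a < N)%nat -> (b < N)%nat -> 0 <= D a b) ->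
  (forall a b, (a < N)%nat -> (b < N)%nat -> D a b = D b a) ->
  (a < N)%nat -> (b < N)%nat -> adj a b = true -> T a = true -> T b = false ->
  Eset N adj D T + 2 * D a b <= Eset N adj D (fun z => T z || Nat.eqb z b).
Proof.
  intros [Hs Hirr] HD HDs Ha Hb Hab HTa HTb.
  set (T' := fun z => T z || Nat.eqb z b).
  set (Dl := fun x y => (bind (T' x && T' y) - bind (T x && T y)) * (aind adj x y * D x y)).
  assert (HDl : forall x y, (x < N)%nat -> (y < N)%nat -> 0 <= Dl x y).
  { intros x y Hx Hy. unfold Dl, T'. assert (0 <= aind adj x y * D x y) by (apply Rmult_le_pos; [apply aind_nonneg|auto]).
    unfold bind. destruct (T x), (T y); simpl; destruct (Nat.eqb x b), (Nat.eqb y b); simpl; nra. }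
  assert (E : Eset N adj D T' = Eset N adj D T + fsum N (fun x => fsum N (fun y => Dl x y))).
  { unfold Eset, Dl. rewrite <- fsum_plus. apply fsum_ext; intros. rewrite <- fsum_plus. apply fsum_ext; intros. ring. }
  assert (Hab' : a <> b) by (intros ->; rewrite Hirr in Hab by auto; discriminate).
  assert (fsum N (fun y => Dl a y) + fsum N (fun y => Dl b y) <= fsum N (fun x => fsum N (fun y => Dl x y))).
  { apply (fsum_ge_two N (fun x => fsum N (fun y => Dl x y))); auto. intros; apply fsum_nonneg; intros; apply HDl; auto. }
  assert (Dl a b <= fsum N (fun y => Dl a y)) by (apply (fsum_ge_term N (Dl a)); auto).
  assert (Dl b a <= fsum N (fun y => Dl b y)) by (apply (fsum_ge_term N (Dl b)); auto).
  assert (Dl a b = D a b).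
  { unfold Dl, T', bind, aind. rewrite HTa, HTb, Hab, Nat.eqb_refl. simpl. ring. }
  assert (Dl b a = D a b).
  { unfold Dl, T', bind, aind. rewrite HTa, HTb, Nat.eqb_refl, <- Hs, Hab by auto. simpl. rewrite HDs by auto. ring. }
  fold T'. lra.
Qed.

Lemma path_bound N adj (D : nat -> nat -> R) : simple_undirected N adj -> connected N adj ->
  (forall a b, (a < N)%nat -> (b < N)%nat -> 0 <= D a b) ->
  (forall a b, (a < N)%nat -> (b < N)%nat -> D a b = D b a) ->
  (forall a, (a < N)%nat -> D a a = 0) ->
  (forall a b c, (a < N)%nat -> (b < N)%nat -> (c < N)%nat -> D a c <= D a b + D b c) ->
  forall i k, (i < N)%nat -> (k < N)%nat ->
  D i k <= / 2 * fsum N (fun x => fsum N (fun y => aind adj x y * D x y)).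
Proof.
  intros Hs Hc HD HDs HD0 Htri i k Hi Hk.
  set (Inv := fun T : nat -> bool => T i = true /\ forall z, (z < N)%nat -> T z = true -> D i z <= / 2 * Eset N adj D T).
  assert (Hmain : forall m T, cntf N T = m -> Inv T -> exists T', Inv T' /\ T' k = true).
  { intros m. induction m as [m IH] using (well_founded_induction lt_wf).
    intros T Hm [HTi HT]. destruct (T k) eqn:Ek.
    - exists T. split; [split|]; auto.
    - assert (Hcr : clos_refl_trans_1n nat (edge N adj) i k) by (apply clos_rt_rt1n, Hc; auto).
      destruct (crossing N adj T i k Hcr HTi Ek) as [a [b [Ha [Hb [Hab [HTa HTb]]]]]].
      apply (IH (cntf N (fun z => T z || Nat.eqb z b)) ltac:(rewrite <- Hm; apply cntf_lt; auto) (fun z => T z || Nat.eqb z b) eq_refl).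
      + pose proof (Eset_step N adj D T a b Hs HD HDs Ha Hb Hab HTa HTb).
        pose proof (HD a b Ha Hb).
        split. { rewrite HTi; auto. }
        intros z Hz HTz. destruct (T z) eqn:Ez.
        * pose proof (HT z Hz Ez). lra.
        * simpl in HTz. apply Nat.eqb_eq in HTz. subst z.
          pose proof (HT a Ha HTa). pose proof (Htri i a b Hi Ha Hb). lra. }
  destruct (Hmain _ (fun z => Nat.eqb z i) eq_refl) as [T' [[_ HT'] HT'k]].
  - split. apply Nat.eqb_refl. intros z Hz Hzi. apply Nat.eqb_eq in Hzi. subst. rewrite HD0 by auto.
    pose proof (Eset_nonneg N adj D (fun z => Nat.eqb z i) HD). lra.
  - pose proof (HT' k Hk HT'k). pose proof (Eset_le_tot N adj D T' HD). lra.
Qed.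

Lemma ip_ext m a a' b b' : (forall k, (k < m)%nat -> a k = a' k) -> (forall k, (k < m)%nat -> b k = b' k) ->
  ip m a b = ip m a' b'.
Proof. intros Ha Hb; unfold ip; apply fsum_ext; intros; rewrite Ha, Hb; auto. Qed.

Lemma mv_ext_mat m M M' v i : (forall j, (j < m)%nat -> M i j = M' i j) -> mv m M v i = mv m M' v i.
Proof. intros H; unfold mv; apply fsum_ext; intros; rewrite H; auto. Qed.

Section Quad.
Variables (n p : nat) (A B Q P : mat).
Hypothesis HPs : Defs.symmetric n P.
Hypothesis HARE : forall i j, (i < n)%nat -> (j < n)%nat ->
     mmul n P A i j + mmul n (mtr A) P i j
     - mmul p (mmul n P B) (mmul n (mtr B) P) i j + Q i j = 0.

Definition BtP : mat := mmul n (mtr B) P.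

Lemma quadA xi : 2 * ip n (mv n A xi) (mv n P xi) = ip p (mv n BtP xi) (mv n BtP xi) - qf n Q xi.
Proof.
  assert (E1 : ip n (mv n A xi) (mv n P xi) = ip n xi (mv n (mmul n (mtr A) P) xi)).
  { rewrite ip_mv_tr. apply ip_ext; auto. intros; rewrite mv_mmul; auto. }
  assert (E2 : ip n (mv n A xi) (mv n P xi) = ip n xi (mv n (mmul n P A) xi)).
  { rewrite ip_comm, ip_mv_tr. apply ip_ext; auto. intros k Hk. rewrite mv_mmul.
    apply mv_ext_mat. intros j Hj. unfold mtr. apply HPs; auto. }
  assert (E3 : ip n xi (mv n (mmul p (mmul n P B) BtP) xi) = ip p (mv n BtP xi) (mv n BtP xi)).
  { rewrite (ip_ext n xi xi _ (mv p (mmul n P B) (mv n BtP xi))); auto.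
    2:{ intros; apply mv_mmul. }
    rewrite ip_comm, ip_mv_tr. apply ip_ext; auto. intros k Hk.
    unfold mv; apply fsum_ext; intros j Hj. f_equal. unfold mtr, BtP, mmul. apply fsum_ext; intros l Hl.
    unfold mtr. rewrite HPs by auto. ring. }
  rewrite <- E3. unfold qf.
  replace (2 * ip n (mv n A xi) (mv n P xi)) with (ip n xi (mv n (mmul n P A) xi) + ip n xi (mv n (mmul n (mtr A) P) xi)) by lra.
  unfold ip. rewrite <- fsum_plus, <- fsum_minus. apply fsum_ext; intros i Hi.
  rewrite <- Rmult_plus_distr_l, <- Rmult_minus_distr_l. f_equal.
  unfold mv. rewrite <- fsum_plus, <- fsum_minus. apply fsum_ext; intros j Hj.
  specialize (HARE i j Hi Hj). unfold BtP. nra.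
Qed.

Lemma quadB v xi : ip n (mv p B v) (mv n P xi) = ip p v (mv n BtP xi).
Proof. rewrite ip_mv_tr. apply ip_ext; auto. intros; unfold BtP; rewrite mv_mmul; auto. Qed.
End Quad.

Lemma ip_nbsum p N adj i g y : ip p (nbsum N adj i g) y = fsum N (fun j => aind adj i j * ip p (g j) y).
Proof. unfold nbsum, vsum, ip.
  rewrite (fsum_ext p _ (fun k => fsum N (fun j => (if adj i j then g j k else 0) * y k))).
  2:{ intros k Hk. rewrite <- fsum_scal_r. apply fsum_ext; intros j Hj; destruct (adj i j); auto. }
  rewrite fsum_swap. apply fsum_ext; intros j Hj. unfold aind. destruct (adj i j).
  - ring.
  - rewrite fsum_zero; [ring|]. intros; ring. Qed.

Lemma ip_sub_r p a b c : ip p a (vsub b c) = ip p a b - ip p a c.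
Proof. unfold ip, vsub. rewrite <- fsum_minus. apply fsum_ext; intros; ring. Qed.

Lemma symmetrize N p adj (g : nat -> nat -> vec) (y : nat -> vec) : simple_undirected N adj ->
  (forall i j k, (i < N)%nat -> (j < N)%nat -> (k < p)%nat -> g j i k = - g i j k) ->
  fsum N (fun i => fsum N (fun j => aind adj i j * ip p (g i j) (y i))) =
  / 2 * fsum N (fun i => fsum N (fun j => aind adj i j * ip p (g i j) (vsub (y i) (y j)))).
Proof. intros Hs Hg.
  assert (H := swap_sym N adj (fun i j => ip p (g i j) (y i)) Hs). simpl in H.
  assert (E : fsum N (fun i => fsum N (fun j => aind adj i j * ip p (g j i) (y j))) =
              - fsum N (fun i => fsum N (fun j => aind adj i j * ip p (g i j) (y j)))).
  { match goal with |- _ = - ?X => replace (- X) with (-1 * X) by ring end. rewrite <- fsum_scal.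
    apply fsum_ext; intros i Hi. rewrite <- fsum_scal. apply fsum_ext; intros j Hj.
    replace (ip p (g j i) (y j)) with (- ip p (g i j) (y j)). ring.
    unfold ip. replace (- fsum p (fun k => g i j k * y j k)) with (-1 * fsum p (fun k => g i j k * y j k)) by ring.
    rewrite <- fsum_scal. apply fsum_ext; intros k Hk. rewrite Hg by auto. ring. }
  rewrite E in H.
  assert (E2 : fsum N (fun i => fsum N (fun j => aind adj i j * ip p (g i j) (vsub (y i) (y j)))) =
    fsum N (fun i => fsum N (fun j => aind adj i j * ip p (g i j) (y i))) - fsum N (fun i => fsum N (fun j => aind adj i j * ip p (g i j) (y j)))).
  { rewrite <- fsum_minus. apply fsum_ext; intros. rewrite <- fsum_minus. apply fsum_ext; intros. rewrite ip_sub_r. ring. }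
  lra. Qed.

Lemma hbl_ip p epsl phi w ti : 0 < epsl ->
  vnorm p w - epsl * exp (- phi * ti) <= ip p (hbl p epsl phi w ti) w.
Proof. intros He. unfold hbl. rewrite ip_scale. rewrite <- vnorm_sq.
  set (d := epsl * exp (- phi * ti)). assert (0 < d) by (unfold d; pose proof (exp_pos (-phi*ti)); nra).
  pose proof (vnorm_nonneg p w). set (v := vnorm p w) in *.
  apply Rmult_le_reg_l with (v + d); [lra|].
  replace ((v + d) * (/ (v + d) * (v * v))) with (v * v) by (field; lra). nra. Qed.

Lemma hbl_antisym p epsl phi w w' ti k : (forall k, (k < p)%nat -> w' k = - w k) -> (k < p)%nat ->
  hbl p epsl phi w' ti k = - hbl p epsl phi w ti k.
Proof. intros H Hk. unfold hbl, vscale.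
  assert (vnorm p w' = vnorm p w).
  { unfold vnorm; f_equal; apply fsum_ext; intros; rewrite H by auto; ring. }
  rewrite H0, H by auto. ring. Qed.

Lemma f_bound N adj p (f y : nat -> vec) f0 : simple_undirected N adj -> connected N adj -> (0 < N)%nat ->
  (forall k, (k < p)%nat -> fsum N (fun i => y i k) = 0) -> (forall i, (i < N)%nat -> vnorm p (f i) <= f0) -> 0 <= f0 ->
  Rabs (fsum N (fun i => ip p (f i) (y i))) <=
  (INR N - 1) * f0 * (/ 2 * fsum N (fun a => fsum N (fun b => aind adj a b * vnorm p (vsub (y a) (y b))))).
Proof.
  intros Hs Hc HN Hy Hf Hf0.
  set (S := / 2 * fsum N (fun a => fsum N (fun b => aind adj a b * vnorm p (vsub (y a) (y b))))).
  assert (HP : forall i k, (i < N)%nat -> (k < N)%nat -> vnorm p (vsub (y i) (y k)) <= S).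
  { intros i k Hi Hk. apply (path_bound N adj (fun a b => vnorm p (vsub (y a) (y b)))); auto.
    - intros; apply vnorm_nonneg.
    - intros; apply vnorm_sub_sym.
    - intros a Ha. rewrite (vnorm_ext p _ (fun _ => 0)). apply vnorm_zero. intros; unfold vsub; ring.
    - intros; apply vnorm_triangle. }
  assert (HS0 : 0 <= S).
  { pose proof (HP 0%nat 0%nat HN HN). pose proof (vnorm_nonneg p (vsub (y 0%nat) (y 0%nat))). lra. }
  assert (Hi : forall i, (i < N)%nat -> Rabs (ip p (f i) (y i)) <= (INR N - 1) * f0 * S / INR N).
  { intros i Hi.
    assert (E : INR N * ip p (f i) (y i) = fsum N (fun k => ip p (f i) (vsub (y i) (y k)))).
    { rewrite (fsum_ext N _ (fun k => ip p (f i) (y i) - ip p (f i) (y k))) by (intros; apply ip_sub_r).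
      rewrite fsum_minus, fsum_const.
      assert (fsum N (fun k => ip p (f i) (y k)) = 0).
      { unfold ip. rewrite fsum_swap. rewrite (fsum_ext p _ (fun l => f i l * fsum N (fun k => y k l))).
        - rewrite fsum_zero; auto. intros l Hl; rewrite Hy; auto; ring.
        - intros; rewrite fsum_scal; auto. }
      lra. }
    assert (Hb : Rabs (fsum N (fun k => ip p (f i) (vsub (y i) (y k)))) <= (INR N - 1) * (f0 * S)).
    { eapply Rle_trans; [apply fsum_abs|]. rewrite <- (fsum_indic_neq N i Hi), <- fsum_scal_r.
      apply fsum_le; intros k Hk. destruct (Nat.eqb_spec k i).
      - subst. rewrite (ip_ext p (f i) (f i) _ (fun _ => 0)); auto.
        + unfold ip. rewrite fsum_zero. rewrite Rabs_R0; lra. intros; ring.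
        + intros; unfold vsub; ring.
      - eapply Rle_trans; [apply cauchy_schwarz_abs|].
        pose proof (vnorm_nonneg p (f i)). pose proof (vnorm_nonneg p (vsub (y i) (y k))).
        pose proof (Hf i Hi). pose proof (HP i k Hi Hk).
        rewrite Rmult_1_l. apply Rmult_le_compat; auto. }
    rewrite <- E in Hb. rewrite Rabs_mult, Rabs_right in Hb by (apply Rle_ge, pos_INR).
    assert (0 < INR N) by (apply lt_0_INR; auto).
    apply Rmult_le_reg_l with (INR N); auto. replace (INR N * ((INR N - 1) * f0 * S / INR N)) with ((INR N - 1) * (f0 * S)) by (field; lra).
    exact Hb. }
  eapply Rle_trans; [apply fsum_abs|].
  eapply Rle_trans; [apply (fsum_le N _ (fun _ => (INR N - 1) * f0 * S / INR N)); exact Hi|].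
  rewrite fsum_const. assert (0 < INR N) by (apply lt_0_INR; auto). right. field. lra.
Qed.

Lemma ip_add_l p a b c : ip p (vadd a b) c = ip p a c + ip p b c.
Proof. unfold ip, vadd. rewrite <- fsum_plus. apply fsum_ext; intros; ring. Qed.

Lemma ip_sub_l p a b c : ip p (vsub a b) c = ip p a c - ip p b c.
Proof. unfold ip, vsub. rewrite <- fsum_minus. apply fsum_ext; intros; ring. Qed.

Lemma dsum_le N (F G : nat -> nat -> R) : (forall i j, (i < N)%nat -> (j < N)%nat -> F i j <= G i j) ->
  fsum N (fun i => fsum N (fun j => F i j)) <= fsum N (fun i => fsum N (fun j => G i j)).
Proof. intros H; apply fsum_le; intros; apply fsum_le; intros; auto. Qed.

Lemma dsum_nonneg N (F : nat -> nat -> R) : (forall i j, (i < N)%nat -> (j < N)%nat -> 0 <= F i j) ->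
  0 <= fsum N (fun i => fsum N (fun j => F i j)).
Proof. intros H; apply fsum_nonneg; intros; apply fsum_nonneg; intros; auto. Qed.

Lemma core (N n p : nat) adj (A B Q P : mat) (f0 epsl phi c1 c2 lam2 ti : R) (xi f : nat -> vec) :
  simple_undirected N adj -> connected N adj -> smallest_nonzero_eigenvalue N (laplacian N adj) lam2 ->
  0 < f0 -> 0 < epsl -> Defs.symmetric n P ->
  (forall i j, (i < n)%nat -> (j < n)%nat ->
     mmul n P A i j + mmul n (mtr A) P i j
     - mmul p (mmul n P B) (mmul n (mtr B) P) i j + Q i j = 0) ->
  c1 >= 1 / (2 * lam2) -> c2 >= f0 * INR (N - 1) ->
  (forall a, (a < n)%nat -> fsum N (fun i => xi i a) = 0) ->
  (forall i, (i < N)%nat -> vnorm p (f i) <= f0) ->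
  let K : mat := fun a b => - mmul n (mtr B) P a b in
  let u := fun i => vadd (vscale c1 (nbsum N adj i (fun j => mv n K (vsub (xi i) (xi j)))))
                         (vscale c2 (nbsum N adj i (fun j => hbl p epsl phi (mv n K (vsub (xi i) (xi j))) ti))) in
  let fbar := vscale (/ INR N) (vsum N f) in
  fsum N (fun i => 2 * (ip n (mv n A (xi i)) (mv n P (xi i)) + ip n (mv p B (u i)) (mv n P (xi i))
                        + ip n (mv p B (vsub (f i) fbar)) (mv n P (xi i))))
  <= - fsum N (fun i => qf n Q (xi i)) + c2 * (epsl * exp (- phi * ti)) * fsum N (fun i => fsum N (fun j => aind adj i j)).
Proof.
  intros Hs Hc Hl Hf0 He HPs HARE Hc1 Hc2 Hxi Hf K u fbar.
  assert (HN : (0 < N)%nat).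
  { destruct Hl as [[v [[k [Hk _]] _]] _]. lia. }
  pose proof (lam2_pos N adj lam2 Hs Hl) as Hlam.
  set (d := epsl * exp (- phi * ti)).
  assert (Hd : 0 < d) by (unfold d; pose proof (exp_pos (- phi * ti)); nra).
  set (y := fun i => mv n K (xi i)).
  set (W := fun i j => mv n K (vsub (xi i) (xi j))).
  set (H := fun i j => hbl p epsl phi (W i j) ti).
  assert (HW : forall i j k, W i j k = y i k - y j k).
  { intros; unfold W, y; apply mv_sub. }
  assert (Hyz : forall i k, y i k = - mv n (BtP n B P) (xi i) k).
  { intros; unfold y, K, mv, BtP. rewrite <- (Rmult_1_l (fsum _ _)) at 1. 
    replace (- fsum n (fun j => mmul n (mtr B) P k j * xi i j)) with (-1 * fsum n (fun j => mmul n (mtr B) P k j * xi i j)) by ring.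
    rewrite <- !fsum_scal. apply fsum_ext; intros; ring. }
  assert (Hy0 : forall k, (k < p)%nat -> fsum N (fun i => y i k) = 0).
  { intros k Hk. unfold y, mv. rewrite fsum_swap. apply fsum_zero; intros b Hb. rewrite fsum_scal, Hxi; auto; ring. }
  assert (Hsum : forall i, (i < N)%nat ->
     2 * (ip n (mv n A (xi i)) (mv n P (xi i)) + ip n (mv p B (u i)) (mv n P (xi i))
          + ip n (mv p B (vsub (f i) fbar)) (mv n P (xi i)))
     = ip p (y i) (y i) - qf n Q (xi i)
       - (c1 * fsum N (fun j => aind adj i j * ip p (W i j) (y i)) + c2 * fsum N (fun j => aind adj i j * ip p (H i j) (y i))) * 2
       - 2 * ip p (vsub (f i) fbar) (y i)).
  { intros i Hi.
    rewrite Rmult_plus_distr_l, Rmult_plus_distr_l, (quadA n p A B Q P HPs HARE).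
    rewrite !(quadB n p B P).
    assert (Ey : ip p (mv n (BtP n B P) (xi i)) (mv n (BtP n B P) (xi i)) = ip p (y i) (y i)).
    { unfold ip; apply fsum_ext; intros; rewrite !Hyz; ring. }
    assert (Ev : forall v, ip p v (mv n (BtP n B P) (xi i)) = - ip p v (y i)).
    { intros v. unfold ip. replace (- fsum p (fun k => v k * y i k)) with (-1 * fsum p (fun k => v k * y i k)) by ring.
      rewrite <- fsum_scal. apply fsum_ext; intros; rewrite Hyz; ring. }
    rewrite Ey, !Ev. unfold u. rewrite ip_add_l, !ip_scale, !ip_nbsum. unfold H, W. ring. }
  rewrite (fsum_ext N _ _ Hsum). clear Hsum.
  rewrite !fsum_minus, fsum_scal_r, fsum_plus.
  rewrite (fsum_scal N c1 (fun i => fsum N (fun j => aind adj i j * ip p (W i j) (y i)))).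
  rewrite (fsum_scal N c2 (fun i => fsum N (fun j => aind adj i j * ip p (H i j) (y i)))).
  rewrite (fsum_scal N 2 (fun i => ip p (vsub (f i) fbar) (y i))).
  rewrite (symmetrize N p adj W y Hs) by (intros; rewrite !HW; ring).
  rewrite (symmetrize N p adj H y Hs).
  2:{ intros i j k Hi Hj Hk. unfold H. apply hbl_antisym; auto. intros; rewrite !HW; ring. }
  set (X := fsum N (fun i => fsum N (fun j => aind adj i j * ip p (W i j) (W i j)))).
  set (Y := fsum N (fun i => fsum N (fun j => aind adj i j * vnorm p (W i j)))).
  set (E := fsum N (fun i => fsum N (fun j => aind adj i j))).
  assert (E1 : fsum N (fun i => fsum N (fun j => aind adj i j * ip p (W i j) (vsub (y i) (y j)))) = X).
  { apply fsum_ext; intros; apply fsum_ext; intros. f_equal. apply ip_ext; intros; auto. }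
  assert (E2 : Y - d * E <= fsum N (fun i => fsum N (fun j => aind adj i j * ip p (H i j) (vsub (y i) (y j))))).
  { unfold Y, E. rewrite <- fsum_scal, <- fsum_minus. apply fsum_le; intros i Hi.
    rewrite <- fsum_scal, <- fsum_minus. apply fsum_le; intros j Hj.
    rewrite (ip_ext p (H i j) (H i j) (vsub (y i) (y j)) (W i j)) by (auto; intros; unfold vsub; rewrite HW; auto).
    pose proof (hbl_ip p epsl phi (W i j) ti He). fold d in H0. fold (H i j) in H0.
    pose proof (aind_nonneg adj i j). nra. }
  rewrite E1.
  assert (HF : fsum N (fun i => ip p (y i) (y i)) <= c1 * X).
  { assert (lam2 * fsum N (fun i => ip p (y i) (y i)) <= / 2 * X).
    { assert (Ea : fsum N (fun i => ip p (y i) (y i)) = fsum p (fun k => ip N (fun i => y i k) (fun i => y i k))).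
      { unfold ip. apply fsum_swap. }
      assert (Eb : X = fsum p (fun k => lapq N adj (fun i => y i k))).
      { unfold X, lapq, ip. symmetry.
        rewrite (fsum_swap p N (fun k i => fsum N (fun j => aind adj i j * ((y i k - y j k) * (y i k - y j k))))).
        apply fsum_ext; intros i Hi.
        rewrite (fsum_swap p N (fun k j => aind adj i j * ((y i k - y j k) * (y i k - y j k)))).
        apply fsum_ext; intros j Hj. rewrite <- fsum_scal. apply fsum_ext; intros; rewrite HW; ring. }
      rewrite Ea, Eb, <- fsum_scal, <- fsum_scal. apply fsum_le; intros k Hk.
      apply fiedler; auto. }
    assert (HX : 0 <= X) by (apply dsum_nonneg; intros; apply Rmult_le_pos; [apply aind_nonneg|apply ip_nonneg]).
    assert (/ (2 * lam2) * X <= c1 * X).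
    { apply Rmult_le_compat_r; auto. unfold Rdiv in Hc1. lra. }
    assert (fsum N (fun i => ip p (y i) (y i)) <= / (2 * lam2) * X).
    { apply Rmult_le_reg_l with lam2; auto. replace (lam2 * (/ (2 * lam2) * X)) with (/ 2 * X) by (field; lra). auto. }
    lra. }
  assert (HFt : - (2 * fsum N (fun i => ip p (vsub (f i) fbar) (y i))) <= c2 * Y).
  { rewrite (fsum_ext N _ (fun i => ip p (f i) (y i) - ip p fbar (y i))) by (intros; apply ip_sub_l).
    rewrite fsum_minus.
    assert (fsum N (fun i => ip p fbar (y i)) = 0).
    { unfold ip. rewrite fsum_swap. apply fsum_zero; intros k Hk. rewrite fsum_scal, Hy0; auto; ring. }
    rewrite H0.
    pose proof (f_bound N adj p f y f0 Hs Hc HN Hy0 Hf ltac:(lra)).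
    assert (EY : fsum N (fun a => fsum N (fun b => aind adj a b * vnorm p (vsub (y a) (y b)))) = Y).
    { apply fsum_ext; intros; apply fsum_ext; intros. f_equal. apply vnorm_ext. intros; unfold vsub; rewrite HW; auto. }
    rewrite EY in H1. apply Rabs_le_inv in H1.
    assert (HY : 0 <= Y) by (apply dsum_nonneg; intros; apply Rmult_le_pos; [apply aind_nonneg|apply vnorm_nonneg]).
    rewrite minus_INR in Hc2 by lia. simpl in Hc2.
    assert ((INR N - 1) * f0 * Y <= c2 * Y) by (apply Rmult_le_compat_r; lra).
    lra. }
  assert (0 <= c2) by (pose proof (pos_INR (N - 1)); nra).
  assert (c2 * (/ 2 * (Y - d * E)) <= c2 * (/ 2 * fsum N (fun i => fsum N (fun j => aind adj i j * ip p (H i j) (vsub (y i) (y j)))))).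
  { apply Rmult_le_compat_l; auto. lra. }
  nra.
Qed.

Lemma posdef_lb n M : posdef n M -> (0 < n)%nat -> exists q, 0 < q /\ forall v, q * ip n v v <= qf n M v.
Proof.
  intros Hpd Hn.
  destruct (qf_min n M (fun _ => 0)) as [v [Hv1 [_ Hmin]]].
  { exists (fun k => if Nat.eqb k 0 then 1 else 0). split.
    - unfold ip. rewrite (fsum_single n _ 0%nat Hn). simpl; ring.
      intros k Hk Hk0. destruct (Nat.eqb_spec k 0); [lia|ring].
    - apply ip_zero_l; auto. }
  exists (qf n M v). split.
  - apply Hpd. apply NNPP. intros Hno. assert (ip n v v = 0).
    { apply ip_zero_l. intros k Hk. apply NNPP. intros Hk'. apply Hno. exists k; auto. }
    lra.
  - intros w. destruct (Req_dec (ip n w w) 0) as [Hw0|Hw0].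
    + rewrite Hw0. unfold qf. rewrite (ip_zero_l n w). lra. apply ip_self_zero; auto.
    + pose proof (ip_nonneg n w). set (c := / sqrt (ip n w w)).
      assert (Hsq : sqrt (ip n w w) * sqrt (ip n w w) = ip n w w) by (apply sqrt_sqrt; lra).
      assert (0 < sqrt (ip n w w)) by (apply sqrt_lt_R0; lra).
      assert (Hcc : c * c * ip n w w = 1) by (unfold c; rewrite <- Hsq at 3; field; lra).
      specialize (Hmin (vscale c w)).
      rewrite ip_scale, ip_scale_r, qf_scale in Hmin.
      specialize (Hmin ltac:(lra) ltac:(apply ip_zero_l; auto)).
      assert (0 < c * c) by (unfold c; apply Rmult_lt_0_compat; apply Rinv_0_lt_compat; lra).
      apply Rmult_le_reg_l with (c * c); auto.
      replace (c*c*(qf n M v*ip n w w)) with (qf n M v * (c*c*ip n w w)) by ring. rewrite Hcc. lra.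
Qed.

Lemma qf_abs_bound n M v : qf n M v <= fsum n (fun i => fsum n (fun j => Rabs (M i j))) * ip n v v.
Proof.
  pose proof (ip_nonneg n v).
  assert (Hb : forall i j, (i < n)%nat -> (j < n)%nat -> Rabs (v i) * Rabs (v j) <= ip n v v).
  { intros i j Hi Hj. assert (v i * v i <= ip n v v) by (apply (fsum_ge_term n (fun k => v k * v k)); auto; intros; apply Rle_0_sqr).
    assert (v j * v j <= ip n v v) by (apply (fsum_ge_term n (fun k => v k * v k)); auto; intros; apply Rle_0_sqr).
    rewrite <- Rabs_mult. apply Rabs_le. split; nra. }
  assert (E : qf n M v = fsum n (fun i => fsum n (fun j => v i * M i j * v j))).
  { unfold qf, ip, mv. apply fsum_ext; intros. rewrite <- fsum_scal. apply fsum_ext; intros; ring. }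
  rewrite E. eapply Rle_trans; [apply Rle_abs|].
  eapply Rle_trans; [apply fsum_abs|]. rewrite <- fsum_scal_r. apply fsum_le; intros i Hi.
  eapply Rle_trans; [apply fsum_abs|]. rewrite <- fsum_scal_r. apply fsum_le; intros j Hj.
  rewrite !Rabs_mult. specialize (Hb i j Hi Hj). pose proof (Rabs_pos (M i j)).
  replace (Rabs (v i) * Rabs (M i j) * Rabs (v j)) with (Rabs (M i j) * (Rabs (v i) * Rabs (v j))) by ring.
  apply Rmult_le_compat_l; auto.
Qed.

Lemma nbsum_k N adj i g k : nbsum N adj i g k = fsum N (fun j => aind adj i j * g j k).
Proof. unfold nbsum, vsum. apply fsum_ext; intros j Hj. unfold aind. destruct (adj i j); ring. Qed.

Lemma antisym_sum N adj (G : nat -> nat -> R) : simple_undirected N adj ->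
  (forall i j, (i < N)%nat -> (j < N)%nat -> G j i = - G i j) ->
  fsum N (fun i => fsum N (fun j => aind adj i j * G i j)) = 0.
Proof. intros Hs HG. pose proof (swap_sym N adj G Hs).
  assert (fsum N (fun i => fsum N (fun j => aind adj i j * G j i)) = - fsum N (fun i => fsum N (fun j => aind adj i j * G i j))).
  { match goal with |- _ = - ?X => replace (- X) with (-1 * X) by ring end. rewrite <- fsum_scal.
    apply fsum_ext; intros. rewrite <- fsum_scal. apply fsum_ext; intros. rewrite HG by auto. ring. }
  lra. Qed.

Theorem theorem1
  (N n p : nat) (adj : nat -> nat -> bool)
  (A B Q P : mat) (f0 epsl phi c1 c2 lam2 t0 eta : R)
  (r f s : nat -> R -> vec) (clk : nat -> R -> R)
  (* Assumption (G) *)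
  (HG1 : simple_undirected N adj) (HG2 : connected N adj)
  (Hlam2 : smallest_nonzero_eigenvalue N (laplacian N adj) lam2)
  (* Assumption (S) *)
  (HS : stabilizable n p A B)
  (* reference signals *)
  (Hf0 : 0 < f0)
  (Hfc : forall i, (i < N)%nat -> vcont_on t0 p (f i))
  (Hfb : forall i t, (i < N)%nat -> t0 <= t -> vnorm p (f i t) <= f0)
  (Hr : forall i, (i < N)%nat ->
          vderiv_on t0 n (r i) (fun t => vadd (mv n A (r i t)) (mv p B (f i t))))
  (* synchronized local clocks *)
  (Hclk : forall i t, (i < N)%nat -> t0 <= t -> clk i t = t + eta)
  (* boundary layer constants *)
  (Heps : 0 < epsl) (Hphi : 0 < phi)
  (* Q, P and the Riccati equation *)
  (HQ : sym_posdef n Q) (HP : sym_posdef n P)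
  (HARE : forall i j, (i < n)%nat -> (j < n)%nat ->
     mmul n P A i j + mmul n (mtr A) P i j
     - mmul p (mmul n P B) (mmul n (mtr B) P) i j + Q i j = 0)
  (* gains *)
  (Hc1 : c1 >= 1 / (2 * lam2)) (Hc2 : c2 >= f0 * INR (N - 1))
  (* the static algorithm (SA) with s_i(t0) = 0 *)
  (Hs0 : forall i k, (i < N)%nat -> (k < n)%nat -> s i t0 k = 0)
  (Hs : let K : mat := fun a b => - mmul n (mtr B) P a b in
        let x : nat -> R -> vec := fun i t => vadd (s i t) (r i t) in
        let u : nat -> R -> vec := fun i t =>
          vadd (vscale c1 (nbsum N adj i (fun j => mv n K (vsub (x i t) (x j t)))))
               (vscale c2 (nbsum N adj i (fun j =>
                   hbl p epsl phi (mv n K (vsub (x i t) (x j t))) (clk i t)))) in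
        forall i, (i < N)%nat ->
          vderiv_on t0 n (s i) (fun t => vadd (mv n A (s i t)) (mv p B (u i t)))) :
  forall i, (i < N)%nat ->
    tends_to_0 (fun t => vnorm n (vsub (vadd (s i t) (r i t))
                                       (vscale (/ INR N) (vsum N (fun k => r k t))))).
Proof.
  intros i0 Hi0.
  destruct (Nat.eq_dec n 0) as [Hn0|Hn0].
  { subst n. intros eps He. exists t0. intros t Ht. unfold vnorm. simpl. rewrite sqrt_0, Rabs_R0. auto. }
  assert (HN : (0 < N)%nat) by lia.
  assert (HNR : 0 < INR N) by (apply lt_0_INR; auto).
  pose (K := (fun a b => - mmul n (mtr B) P a b) : mat).
  pose (x := fun i t => vadd (s i t) (r i t)).
  pose (u := fun i t => vadd (vscale c1 (nbsum N adj i (fun j => mv n K (vsub (x i t) (x j t)))))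
               (vscale c2 (nbsum N adj i (fun j => hbl p epsl phi (mv n K (vsub (x i t) (x j t))) (clk i t))))).
  assert (Hs' : forall i, (i < N)%nat -> vderiv_on t0 n (s i) (fun t => vadd (mv n A (s i t)) (mv p B (u i t)))) by exact Hs.
  clear Hs.
  assert (Husum : forall t k, t0 <= t -> fsum N (fun i => u i t k) = 0).
  { intros t k Ht. unfold u, vadd, vscale.
    rewrite fsum_plus, fsum_scal, fsum_scal.
    rewrite (fsum_ext N (fun i => nbsum N adj i _ k) (fun i => fsum N (fun j => aind adj i j * mv n K (vsub (x i t) (x j t)) k))) by (intros; apply nbsum_k).
    rewrite (fsum_ext N (fun i => nbsum N adj i (fun j => hbl _ _ _ _ (clk i t)) k)
       (fun i => fsum N (fun j => aind adj i j * hbl p epsl phi (mv n K (vsub (x i t) (x j t))) (t + eta) k))).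
    2:{ intros i Hi. rewrite nbsum_k. rewrite Hclk by auto. reflexivity. }
    rewrite (antisym_sum N adj (fun i j => mv n K (vsub (x i t) (x j t)) k)); auto.
    2:{ intros; rewrite !mv_sub; ring. }
    rewrite (antisym_sum N adj (fun i j => hbl p epsl phi (mv n K (vsub (x i t) (x j t))) (t + eta) k)); auto.
    { ring. }
    intros i j Hi Hj. unfold hbl, vscale.
    assert (vnorm p (mv n K (vsub (x j t) (x i t))) = vnorm p (mv n K (vsub (x i t) (x j t)))).
    { unfold vnorm; f_equal; apply fsum_ext; intros. rewrite !mv_sub; ring. }
    rewrite H, !mv_sub. ring. }
  set (sg := fun t k => fsum N (fun i => s i t k)).
  set (dsg := fun t k => fsum N (fun i => vadd (mv n A (s i t)) (mv p B (u i t)) k)).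
  assert (Hsgd : forall k, (k < n)%nat -> deriv_on t0 (fun t => sg t k) (fun t => dsg t k)).
  { intros k Hk. apply (deriv_on_fsum t0 N (fun i t => s i t k)). intros i Hi. apply Hs'; auto. }
  assert (Hsgd2 : forall t k, t0 <= t -> dsg t k = mv n A (sg t) k).
  { intros t k Ht. unfold dsg, vadd. rewrite fsum_plus.
    assert (fsum N (fun i => mv p B (u i t) k) = 0).
    { rewrite <- (mv_vsum p B N (fun i => u i t) k). unfold mv. apply fsum_zero; intros j Hj. unfold vsum. rewrite Husum; auto; ring. }
    rewrite H, <- (mv_vsum n A N (fun i => s i t) k). unfold sg, vsum. ring. }
  set (Wg := fun t => ip n (sg t) (sg t)).
  set (aA := fsum n (fun i => fsum n (fun j => Rabs (A i j)))).
  assert (HWd : deriv_on t0 Wg (fun t => fsum n (fun k => dsg t k * sg t k + sg t k * dsg t k))).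
  { apply (deriv_on_fsum t0 n (fun k t => sg t k * sg t k)). intros k Hk. apply deriv_on_mult; apply Hsgd; auto. }
  assert (Hsg0 : forall t k, t0 <= t -> (k < n)%nat -> sg t k = 0).
  { intros t k Ht Hk. apply (ip_self_zero n (sg t)); auto.
    apply (gronwall_zero t0 Wg _ (2 * aA) HWd); auto.
    - intros; apply ip_nonneg.
    - intros t' Ht'. rewrite (fsum_ext n _ (fun k => 2 * (sg t' k * mv n A (sg t') k))) by (intros; rewrite Hsgd2 by auto; ring).
      rewrite fsum_scal. pose proof (qf_abs_bound n A (sg t')). unfold qf, ip in H. unfold Wg, ip. fold aA in H. lra.
    - unfold Wg. apply ip_zero_l. intros k' Hk'. unfold sg. apply fsum_zero. intros; apply Hs0; auto. }
  set (xb := fun t => vscale (/ INR N) (vsum N (fun l => x l t))).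
  set (xi := fun i t => vsub (x i t) (xb t)).
  assert (Hxisum : forall t a, fsum N (fun i => xi i t a) = 0).
  { intros t a. unfold xi, vsub, xb, vscale, vsum. rewrite fsum_minus, fsum_const. field. lra. }
  set (dx := fun i t => vadd (vadd (mv n A (s i t)) (mv p B (u i t))) (vadd (mv n A (r i t)) (mv p B (f i t)))).
  set (dxi := fun i t => vsub (dx i t) (vscale (/ INR N) (vsum N (fun l => dx l t)))).
  assert (Hxid : forall i k, (i < N)%nat -> (k < n)%nat -> deriv_on t0 (fun t => xi i t k) (fun t => dxi i t k)).
  { intros i k Hi Hk. unfold xi, dxi, vsub, xb, vscale, vsum.
    apply deriv_on_minus.
    - apply deriv_on_plus; [apply Hs'|apply Hr]; auto.
    - apply deriv_on_scal. apply (deriv_on_fsum t0 N (fun l t => x l t k)). intros l Hl.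
      apply deriv_on_plus; [apply Hs'|apply Hr]; auto. }
  set (fbar := fun t => vscale (/ INR N) (vsum N (fun l => f l t))).
  assert (Hdxi : forall t i k, t0 <= t -> (i < N)%nat -> (k < n)%nat ->
     dxi i t k = mv n A (xi i t) k + mv p B (u i t) k + mv p B (vsub (f i t) (fbar t)) k).
  { intros t i k Ht Hi Hk.
    assert (HB0 : fsum N (fun l => mv p B (u l t) k) = 0).
    { rewrite <- (mv_vsum p B N (fun i => u i t) k). unfold mv. apply fsum_zero; intros j Hj. unfold vsum. rewrite Husum; auto; ring. }
    assert (E1 : dxi i t k = dx i t k - / INR N * fsum N (fun l => dx l t k)) by reflexivity.
    assert (E2 : forall l, dx l t k = mv n A (s l t) k + mv p B (u l t) k + (mv n A (r l t) k + mv p B (f l t) k)) by reflexivity.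
    rewrite E1, E2, (fsum_ext N _ _ (fun l _ => E2 l)), !fsum_plus, HB0.
    unfold xi. rewrite mv_sub. unfold xb. rewrite mv_scale, mv_vsum. unfold x. rewrite mv_add.
    rewrite (fsum_ext N (fun j => mv n A (vadd (s j t) (r j t)) k) (fun j => mv n A (s j t) k + mv n A (r j t) k)) by (intros; apply mv_add).
    rewrite fsum_plus. unfold fbar. rewrite mv_sub, mv_scale, mv_vsum. ring. }
  set (V := fun t => fsum N (fun i => qf n P (xi i t))).
  set (dV := fun t => fsum N (fun i => fsum n (fun a => dxi i t a * mv n P (xi i t) a + xi i t a * mv n P (dxi i t) a))).
  assert (HVd : deriv_on t0 V dV).
  { apply (deriv_on_fsum t0 N (fun i t => qf n P (xi i t))). intros i Hi. unfold qf, ip.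
    apply (deriv_on_fsum t0 n (fun a t => xi i t a * mv n P (xi i t) a)). intros a Ha.
    apply deriv_on_mult; [apply Hxid; auto|]. unfold mv.
    apply (deriv_on_fsum t0 n (fun b t => P a b * xi i t b)). intros b Hb. apply deriv_on_scal, Hxid; auto. }
  destruct HP as [HPs HPpd]. destruct HQ as [_ HQpd].
  assert (HdV : forall t, t0 <= t -> dV t = fsum N (fun i => 2 * (ip n (mv n A (xi i t)) (mv n P (xi i t)) + ip n (mv p B (u i t)) (mv n P (xi i t))
                        + ip n (mv p B (vsub (f i t) (fbar t))) (mv n P (xi i t))))).
  { intros t Ht. unfold dV. apply fsum_ext; intros i Hi.
    rewrite fsum_plus. fold (ip n (dxi i t) (mv n P (xi i t))). fold (ip n (xi i t) (mv n P (dxi i t))).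
    assert (ip n (xi i t) (mv n P (dxi i t)) = ip n (dxi i t) (mv n P (xi i t))).
    { rewrite ip_comm, ip_mv_tr. apply ip_ext; auto. intros; apply mv_ext_mat. intros; unfold mtr; apply HPs; auto. }
    rewrite H.
    rewrite (ip_ext n (dxi i t) (vadd (vadd (mv n A (xi i t)) (mv p B (u i t))) (mv p B (vsub (f i t) (fbar t)))) (mv n P (xi i t)) (mv n P (xi i t))).
    - rewrite !ip_add_l. ring.
    - intros k Hk. rewrite Hdxi; auto.
    - auto. }
  set (E := fsum N (fun i => fsum N (fun j => aind adj i j))).
  assert (HdVb : forall t, t0 <= t -> dV t <= - fsum N (fun i => qf n Q (xi i t)) + c2 * (epsl * exp (- phi * (t + eta))) * E).
  { intros t Ht.
    pose proof (core N n p adj A B Q P f0 epsl phi c1 c2 lam2 (t + eta) (fun i => xi i t) (fun i => f i t)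
        HG1 HG2 Hlam2 Hf0 Heps HPs HARE Hc1 Hc2 (fun a _ => Hxisum t a) (fun i Hi => Hfb i t Hi Ht)) as HC.
    rewrite HdV by auto. eapply Rle_trans; [|exact HC]. right.
    apply fsum_ext; intros i Hi.
    assert (Hv : forall j, vsub (x i t) (x j t) = vsub (xi i t) (xi j t)).
    { intros; apply functional_extensionality; intros; unfold xi, vsub; ring. }
    assert (Hu : u i t = vadd (vscale c1 (nbsum N adj i (fun j => mv n K (vsub (xi i t) (xi j t)))))
               (vscale c2 (nbsum N adj i (fun j => hbl p epsl phi (mv n K (vsub (xi i t) (xi j t))) (t + eta))))).
    { unfold u. rewrite Hclk by auto.
      replace (fun j => mv n K (vsub (x i t) (x j t))) with (fun j => mv n K (vsub (xi i t) (xi j t)))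
        by (apply functional_extensionality; intros; rewrite Hv; auto).
      replace (fun j => hbl p epsl phi (mv n K (vsub (x i t) (x j t))) (t + eta)) with (fun j => hbl p epsl phi (mv n K (vsub (xi i t) (xi j t))) (t + eta))
        by (apply functional_extensionality; intros; rewrite Hv; auto).
      reflexivity. }
    rewrite Hu. reflexivity. }
  destruct (posdef_lb n Q HQpd ltac:(lia)) as [q [Hq HqQ]].
  destruct (posdef_lb n P HPpd ltac:(lia)) as [pm [Hpm HpP]].
  set (pM := fsum n (fun i => fsum n (fun j => Rabs (P i j))) + 1).
  assert (HpM : 0 < pM).
  { unfold pM. assert (0 <= fsum n (fun i => fsum n (fun j => Rabs (P i j)))) by
      (apply fsum_nonneg; intros; apply fsum_nonneg; intros; apply Rabs_pos). lra. }
  assert (HPup : forall v, qf n P v <= pM * ip n v v).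
  { intros v. pose proof (qf_abs_bound n P v). pose proof (ip_nonneg n v). unfold pM. nra. }
  assert (HV0 : forall t, t0 <= t -> 0 <= V t).
  { intros t Ht. apply fsum_nonneg; intros i Hi. pose proof (HpP (xi i t)). pose proof (ip_nonneg n (xi i t)). nra. }
  assert (Hc20 : 0 <= c2) by (pose proof (pos_INR (N - 1)); nra).
  assert (HE0 : 0 <= E) by (apply fsum_nonneg; intros; apply fsum_nonneg; intros; apply aind_nonneg).
  set (beta := c2 * epsl * E * exp (- phi * eta)).
  assert (Hbeta : 0 <= beta).
  { unfold beta. pose proof (exp_pos (- phi * eta)). apply Rmult_le_pos; [|lra]. apply Rmult_le_pos; [|auto]. nra. }
  assert (HVb : forall t, t0 <= t -> dV t <= - (q / pM) * V t + beta * exp (- phi * t)).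
  { intros t Ht. eapply Rle_trans; [apply HdVb; auto|].
    assert (E1 : exp (- phi * (t + eta)) = exp (- phi * t) * exp (- phi * eta)) by (rewrite <- exp_plus; f_equal; ring).
    assert (Hqq : (q / pM) * V t <= fsum N (fun i => qf n Q (xi i t))).
    { apply Rle_trans with (q * fsum N (fun i => ip n (xi i t) (xi i t))).
      - unfold V. rewrite <- fsum_scal, <- fsum_scal. apply fsum_le; intros i Hi.
        pose proof (HPup (xi i t)). unfold Rdiv.
        replace (q * / pM * qf n P (xi i t)) with (q * (/ pM * qf n P (xi i t))) by ring.
        apply Rmult_le_compat_l; [lra|]. apply Rmult_le_reg_l with pM; auto.
        replace (pM * (/ pM * qf n P (xi i t))) with (qf n P (xi i t)) by (field; lra). lra.
      - rewrite <- fsum_scal. apply fsum_le; intros; apply HqQ. }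
    rewrite E1. unfold beta. nra. }
  assert (HVt := comparison t0 V dV (q / pM) beta phi HVd HV0 HVb ltac:(apply Rdiv_lt_0_compat; auto) Hphi Hbeta).
  intros eps He.
  destruct (HVt (pm * (eps * eps)) ltac:(apply Rmult_lt_0_compat; [auto|apply Rmult_lt_0_compat; auto])) as [T HT].
  exists (Rmax T t0). intros t Ht.
  assert (HtT : T <= t) by (eapply Rle_trans; [apply Rmax_l|exact Ht]).
  assert (Ht0 : t0 <= t) by (eapply Rle_trans; [apply Rmax_r|exact Ht]).
  rewrite (vnorm_ext n _ (xi i0 t)).
  2:{ intros k Hk. unfold xi, xb, x, vsub, vadd, vscale, vsum.
      rewrite fsum_plus. fold (sg t k). rewrite Hsg0 by auto. ring. }
  specialize (HT t HtT). rewrite Rabs_right in HT by (apply Rle_ge, HV0; auto).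
  rewrite Rabs_right by (apply Rle_ge, vnorm_nonneg).
  assert (Hip : pm * ip n (xi i0 t) (xi i0 t) <= V t).
  { eapply Rle_trans; [apply HpP|]. unfold V. apply (fsum_ge_term N (fun i => qf n P (xi i t))); auto.
    intros i Hi. pose proof (HpP (xi i t)). pose proof (ip_nonneg n (xi i t)). nra. }
  pose proof (vnorm_sq n (xi i0 t)). pose proof (vnorm_nonneg n (xi i0 t)).
  assert (ip n (xi i0 t) (xi i0 t) < eps * eps).
  { apply Rmult_lt_reg_l with pm; auto. lra. }
  nra.
Qed.
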